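(* Let $H\in(0,1/2]$ and $\rho\in(-1,1)$. The ordinary differential equation $$g'(y)^2\left(1+2\rho\frac{y}{2H+1}+\frac{y^2}{(2H+1)^2}\right) = 1-(1-2H)\left(1-\frac{y g'(y)}{g(y)}\right),\qquad g(0)=0,\quad g'(0)>0,$$ has a unique $C^1$ solution $g$ on $\mathbb{R}$. This solution is $C^2$, satisfies, as $y\to0$, $$g(y)=g'(0)y+g''(0)\tfrac{y^2}{2}+O(y^3),\quad g'(y)=g'(0)+g''(0)y+O(y^2),\quad g''(y)=g''(0)+O(y),$$ and satisfies $g(y)/y>0$ for all $y\neq0$. *)

(* Defs.v *)
From Stdlib Require Import Reals.
From Coquelicot Require Import Coquelicot.
Open Scope R_scope.

Definition C1 (g : R -> R) : Prop :=
  (forall x, ex_derive g x) /\ (forall x, continuous (Derive g) x).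

Definition C2 (g : R -> R) : Prop := C1 g /\ C1 (Derive g).

(* The ODE at a point y <> 0 (where y g'(y)/g(y) must be defined, i.e. g y <> 0). *)
Definition ode_at (H rho : R) (g : R -> R) (y : R) : Prop :=
  g y <> 0 /\
  (Derive g y) ^ 2 * (1 + 2 * rho * (y / (2 * H + 1)) + y ^ 2 / (2 * H + 1) ^ 2)
  = 1 - (1 - 2 * H) * (1 - y * Derive g y / g y).

Definition is_solution (H rho : R) (g : R -> R) : Prop :=
  C1 g /\ g 0 = 0 /\ 0 < Derive g 0 /\
  (forall y, y <> 0 -> ode_at H rho g y).

Definition bigO_at0 (f p : R -> R) (k : nat) : Prop :=
  exists C delta, 0 < delta /\
    forall y, Rabs y < delta -> Rabs (f y - p y) <= C * Rabs y ^ k.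

(* Main.v *)
Require Import Defs.
From Stdlib Require Import Reals Lra Lia FunctionalExtensionality.
From Coquelicot Require Import Coquelicot.
Open Scope R_scope.

Section C.
Context {U : UniformSpace}.
Lemma cU_plus (f g : U -> R) x : continuous f x -> continuous g x -> continuous (fun y => f y + g y) x.
Proof. intros; apply (continuous_plus (V:=R_NormedModule) f g); auto. Qed.
Lemma cU_mult (f g : U -> R) x : continuous f x -> continuous g x -> continuous (fun y => f y * g y) x.
Proof. intros; apply (continuous_mult (K:=R_AbsRing) f g); auto. Qed.
Lemma cU_opp (f : U -> R) x : continuous f x -> continuous (fun y => - f y) x.
Proof. intros; apply (continuous_opp (V:=R_NormedModule) f); auto. Qed.
Lemma cU_minus (f g : U -> R) x : continuous f x -> continuous g x -> continuous (fun y => f y - g y) x.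
Proof. intros; apply cU_plus; auto; apply cU_opp; auto. Qed.
Lemma cU_const (k : R) x : continuous (fun _ : U => k) x.
Proof. apply continuous_const. Qed.
Lemma cU_comp (f : U -> R) (g : R -> R) x : continuous f x -> continuous g (f x) -> continuous (fun y => g (f y)) x.
Proof. intros; apply (continuous_comp f g); auto. Qed.
Lemma cU_sqrt (f : U -> R) x : continuous f x -> continuous (fun y => sqrt (f y)) x.
Proof. intros; apply cU_comp; auto; apply continuous_sqrt. Qed.
Lemma cU_inv (f : U -> R) x : continuous f x -> f x <> 0 -> continuous (fun y => / f y) x.
Proof. intros; apply cU_comp; auto; apply continuous_Rinv; auto. Qed.
Lemma cU_div (f g : U -> R) x : continuous f x -> continuous g x -> g x <> 0 -> continuous (fun y => f y / g y) x.
Proof. intros; apply cU_mult; auto; apply cU_inv; auto. Qed.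
Lemma cU_pow (f : U -> R) n x : continuous f x -> continuous (fun y => f y ^ n) x.
Proof. intros; induction n; simpl; [apply cU_const| apply cU_mult; auto]. Qed.
End C.

Lemma c_fst (y z : R) : continuous (fun p : R * R => fst p) (y, z).
Proof. apply continuous_fst. Qed.
Lemma c_snd (y z : R) : continuous (fun p : R * R => snd p) (y, z).
Proof. apply continuous_snd. Qed.
Lemma c_id (y : R) : continuous (fun t : R => t) y.
Proof. apply continuous_id. Qed.

Lemma Derive_eq (f : R -> R) x l : is_derive f x l -> Derive f x = l.
Proof. apply is_derive_unique. Qed.

Lemma exd_cont (f : R -> R) x : ex_derive f x -> continuous f x.
Proof. intros H. apply (ex_derive_continuous (K := R_AbsRing) (V := R_NormedModule)). exact H. Qed.

Lemma ballR (x e y : R) : ball x e y <-> Rabs (y - x) < e.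
Proof. reflexivity. Qed.

Lemma cont_eps (f : R -> R) x : continuous f x ->
  forall eps, 0 < eps -> exists d, 0 < d /\ forall t, Rabs (t - x) < d -> Rabs (f t - f x) < eps.
Proof.
  intros Hc eps He.
  destruct (proj1 (filterlim_locally f (f x)) Hc (mkposreal eps He)) as [d Hd].
  exists d; split; [apply cond_pos|]. intros t Ht. apply (Hd t). exact Ht.
Qed.

Lemma cont2_eps (F : R -> R -> R) y z :
  continuous (fun p : R * R => F (fst p) (snd p)) (y, z) ->
  forall eps, 0 < eps -> exists d, 0 < d /\ forall s t, Rabs (s - y) < d -> Rabs (t - z) < d ->
     Rabs (F s t - F y z) < eps.
Proof.
  intros Hc eps He.
  destruct (proj1 (filterlim_locally _ _) Hc (mkposreal eps He)) as [d Hd].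
  exists d; split; [apply cond_pos|]. intros s t Hs Ht.
  apply (Hd (s, t)). split; assumption.
Qed.

Section Iteration.
Variable F : R -> R -> R.
Variables u v : R -> R.
Hypothesis HF : forall y z, continuous (fun p : R * R => F (fst p) (snd p)) (y, z).
Hypothesis HFm : forall y z1 z2, 0 <= y -> z1 <= z2 -> F y z1 <= F y z2.
Hypothesis Hu : forall y, continuous u y.
Hypothesis Hv : forall y, continuous v y.
Hypothesis Huv : forall y, 0 <= y -> u y <= v y.
Hypothesis Hsub : forall y, 0 <= y -> u y <= RInt (fun t => F t (u t)) 0 y.
Hypothesis Hsup : forall y, 0 <= y -> RInt (fun t => F t (v t)) 0 y <= v y.

Lemma contF (w : R -> R) y : continuous w y -> continuous (fun t => F t (w t)) y.
Proof.
  intro Hw. apply (continuous_comp_2 (fun t => t) w F); auto.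
  apply continuous_id.
Qed.

Lemma exRF (w : R -> R) a b : (forall y, continuous w y) -> ex_RInt (fun t => F t (w t)) a b.
Proof.
  intros Hw. apply (ex_RInt_continuous (V:=R_CompleteNormedModule)). intros; apply contF; auto.
Qed.

Lemma derRF (w : R -> R) y : (forall y, continuous w y) ->
  is_derive (fun x => RInt (fun t => F t (w t)) 0 x) y (F y (w y)).
Proof.
  intros Hw. apply (is_derive_RInt (fun t => F t (w t)) _ 0).
  - exists (mkposreal 1 Rlt_0_1). intros b _. apply (RInt_correct (V:=R_CompleteNormedModule)), exRF; auto.
  - apply contF; auto.
Qed.

Fixpoint zs (n : nat) : R -> R :=
  match n with O => u | S m => fun y => RInt (fun t => F t (zs m t)) 0 y end.

Lemma zs_cont n : forall y, continuous (zs n) y.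
Proof.
  induction n; simpl; intros y; auto.
  apply exd_cont. eexists. apply derRF; auto.
Qed.

Lemma zs_der n y : is_derive (zs (S n)) y (F y (zs n y)).
Proof. simpl. apply derRF. apply zs_cont. Qed.

Lemma RInt_mono (w1 w2 : R -> R) y : 0 <= y -> (forall y, continuous w1 y) -> (forall y, continuous w2 y) ->
  (forall t, 0 <= t -> w1 t <= w2 t) ->
  RInt (fun t => F t (w1 t)) 0 y <= RInt (fun t => F t (w2 t)) 0 y.
Proof.
  intros Hy H1 H2 H12. apply RInt_le; auto; try apply exRF; auto.
  intros x Hx. apply HFm; try lra. apply H12; lra.
Qed.

Lemma zs_incr n : forall y, 0 <= y -> zs n y <= zs (S n) y.
Proof.
  induction n; intros y Hy.
  - simpl. apply Hsub; auto.
  - change (RInt (fun t => F t (zs n t)) 0 y <= RInt (fun t => F t (zs (S n) t)) 0 y).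
    apply RInt_mono; auto; apply zs_cont.
Qed.

Lemma zs_le_v n : forall y, 0 <= y -> zs n y <= v y.
Proof.
  induction n; intros y Hy.
  - simpl. apply Huv; auto.
  - simpl. eapply Rle_trans; [|apply Hsup; auto].
    apply RInt_mono; auto. apply zs_cont.
Qed.

Lemma u_le_zs n : forall y, 0 <= y -> u y <= zs n y.
Proof.
  induction n; intros y Hy; simpl; [lra|].
  eapply Rle_trans; [apply IHn; auto|]. apply (zs_incr n y Hy).
Qed.

Definition zstar (y : R) : R := real (Lim_seq (fun n => zs n y)).

Lemma zstar_lim y : 0 <= y -> is_lim_seq (fun n => zs n y) (zstar y).
Proof.
  intros Hy. unfold zstar.
  assert (Hex : ex_finite_lim_seq (fun n => zs n y)).
  { apply ex_finite_lim_seq_incr with (v y).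
    - intros n; apply zs_incr; auto.
    - intros n; apply zs_le_v; auto. }
  destruct Hex as [l Hl]. rewrite (is_lim_seq_unique _ _ Hl). simpl. exact Hl.
Qed.

Lemma zstar_bounds y : 0 <= y -> u y <= zstar y <= v y.
Proof.
  intros Hy. pose proof (zstar_lim y Hy) as Hl. split.
  - apply is_lim_seq_incr_compare with (n := O) in Hl; [simpl in Hl; auto|].
    intros n; apply zs_incr; auto.
  - assert (Hle := is_lim_seq_le (fun n => zs n y) (fun _ => v y) (zstar y) (v y)).
    simpl in Hle. apply Hle; [intros; apply zs_le_v; auto| auto | apply is_lim_seq_const].
Qed.

Lemma zs_mvt n t1 t2 : exists c, Rmin t1 t2 <= c <= Rmax t1 t2 /\
   zs (S n) t2 - zs (S n) t1 = F c (zs n c) * (t2 - t1).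
Proof.
  apply (MVT_gen (zs (S n)) t1 t2 (fun c => F c (zs n c))).
  - intros x _. apply zs_der.
  - intros x _. apply continuity_pt_filterlim. apply zs_cont.
Qed.

Lemma zstar_der y : 0 < y -> is_derive zstar y (F y (zstar y)).
Proof.
  intros Hy. apply is_derive_Reals. intros eps Heps.
  destruct (cont_eps (fun t => F t (v t)) y (contF v y (Hv y)) 1 Rlt_0_1) as [d1 [Hd1 Hb1]].
  destruct (cont_eps (fun t => F t (u t)) y (contF u y (Hu y)) 1 Rlt_0_1) as [d0 [Hd0 Hb0]].
  set (M := Rabs (F y (v y)) + Rabs (F y (u y)) + 1).
  assert (HM0 : 0 < M) by (unfold M; pose proof (Rabs_pos (F y (v y))); pose proof (Rabs_pos (F y (u y))); lra).
  set (r := Rmin (Rmin d1 d0) (y/2)).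
  assert (Hr : 0 < r) by (unfold r; repeat apply Rmin_glb_lt; lra).
  assert (Hr1 : r <= d1) by (unfold r; eapply Rle_trans; [apply Rmin_l|apply Rmin_l]).
  assert (Hr0 : r <= d0) by (unfold r; eapply Rle_trans; [apply Rmin_l|apply Rmin_r]).
  assert (Hr2 : r <= y/2) by (unfold r; apply Rmin_r).
  assert (HM : forall n t, Rabs (t - y) < r -> Rabs (F t (zs n t)) <= M).
  { intros n t Ht.
    assert (Ht0 : 0 <= t) by (apply Rabs_def2 in Ht; lra).
    pose proof (u_le_zs n t Ht0) as Hl. pose proof (zs_le_v n t Ht0) as Hu'.
    pose proof (HFm t _ _ Ht0 Hl) as Hf1. pose proof (HFm t _ _ Ht0 Hu') as Hf2.
    specialize (Hb1 t ltac:(lra)). specialize (Hb0 t ltac:(lra)).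
    apply Rabs_def2 in Hb1. apply Rabs_def2 in Hb0.
    pose proof (Rle_abs (F y (v y))). pose proof (Rle_abs (- F y (u y))). rewrite Rabs_Ropp in H0.
    apply Rabs_le; unfold M; pose proof (Rabs_pos (F y (v y))); pose proof (Rabs_pos (F y (u y))); lra. }
  assert (HL : forall n t1 t2, Rabs (t1 - y) < r -> Rabs (t2 - y) < r ->
     Rabs (zs (S n) t2 - zs (S n) t1) <= M * Rabs (t2 - t1)).
  { intros n t1 t2 H1 H2. destruct (zs_mvt n t1 t2) as [c [Hc Heq]].
    rewrite Heq, Rabs_mult. apply Rmult_le_compat_r; [apply Rabs_pos|]. apply HM.
    apply Rabs_def2 in H1; apply Rabs_def2 in H2. destruct Hc as [Hc1 Hc2]. apply Rabs_def1.
    - assert (Rmax t1 t2 < y + r) by (apply Rmax_lub_lt; lra); lra.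
    - assert (y - r < Rmin t1 t2) by (apply Rmin_glb_lt; lra); lra. }
  destruct (cont2_eps F y (zstar y) (HF y (zstar y)) (eps/2) ltac:(lra)) as [d2 [Hd2 HF2]].
  set (del := Rmin r (d2 / (2 * M))).
  assert (Hdel : 0 < del) by (unfold del; apply Rmin_glb_lt; [lra| apply Rdiv_lt_0_compat; lra]).
  exists (mkposreal del Hdel). intros h Hh0 Hh. simpl in Hh.
  assert (Hhr : Rabs h < r) by (eapply Rlt_le_trans; [apply Hh|apply Rmin_l]).
  assert (HhM : M * Rabs h < d2 / 2).
  { assert (Rabs h < d2 / (2 * M)) by (eapply Rlt_le_trans; [apply Hh|apply Rmin_r]).
    apply (Rmult_lt_compat_l M) in H; [|lra].
    replace (M * (d2 / (2 * M))) with (d2/2) in H by (field; lra). exact H. }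
  assert (Hah : 0 < Rabs h) by (apply Rabs_pos_lt; auto).
  assert (Hyh : 0 <= y + h) by (apply Rabs_def2 in Hhr; lra).
  pose proof (proj1 (is_lim_seq_Reals _ _) (zstar_lim y (Rlt_le _ _ Hy))) as Cy.
  pose proof (proj1 (is_lim_seq_Reals _ _) (zstar_lim (y + h) Hyh)) as Cyh.
  destruct (Cy (Rmin (d2/2) (eps * Rabs h / 8)) ltac:(apply Rmin_glb_lt; [lra| apply Rdiv_lt_0_compat; [apply Rmult_lt_0_compat|]; lra])) as [N1 HN1].
  destruct (Cyh (eps * Rabs h / 8) ltac:(apply Rdiv_lt_0_compat; [apply Rmult_lt_0_compat|]; lra)) as [N2 HN2].
  set (n := (N1 + N2)%nat).
  assert (E1 := HN1 (S n) ltac:(unfold n; lia)).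
  assert (E2 := HN1 (S (S n)) ltac:(unfold n; lia)).
  assert (E3 := HN2 (S (S n)) ltac:(unfold n; lia)).
  unfold Rdist in E1, E2, E3.
  destruct (zs_mvt (S n) y (y + h)) as [c [Hc Heq]].
  assert (Hcy : Rabs (c - y) <= Rabs h).
  { destruct (Rle_dec 0 h).
    - rewrite Rmin_left in Hc by lra. rewrite Rmax_right in Hc by lra.
      rewrite Rabs_right by lra. rewrite Rabs_right by lra. lra.
    - rewrite Rmin_right in Hc by lra. rewrite Rmax_left in Hc by lra.
      rewrite Rabs_left1 by lra. rewrite (Rabs_left h) by lra. lra. }
  assert (Hc2 : Rabs (zs (S n) c - zstar y) < d2).
  { assert (Hcr : Rabs (c - y) < r) by lra.
    assert (HL' := HL n y c ltac:(rewrite Rminus_diag, Rabs_R0; lra) Hcr).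
    assert (Rmin (d2/2) (eps * Rabs h / 8) <= d2/2) by apply Rmin_l.
    replace (zs (S n) c - zstar y) with ((zs (S n) c - zs (S n) y) + (zs (S n) y - zstar y)) by ring.
    eapply Rle_lt_trans; [apply Rabs_triang|].
    assert (M * Rabs (c - y) <= M * Rabs h) by (apply Rmult_le_compat_l; lra).
    lra. }
  assert (HM1 : 1 <= M) by (unfold M; pose proof (Rabs_pos (F y (v y))); pose proof (Rabs_pos (F y (u y))); lra).
  assert (Rabs h <= M * Rabs h) by nra.
  assert (HFc := HF2 c (zs (S n) c) ltac:(lra) Hc2).
  assert (Rmin (d2/2) (eps * Rabs h / 8) <= eps * Rabs h / 8) by apply Rmin_r.
  replace ((zstar (y + h) - zstar y) / h - F y (zstar y)) with
    ((zstar (y + h) - zs (S (S n)) (y + h)) / h - (zstar y - zs (S (S n)) y) / h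
      + ((zs (S (S n)) (y + h) - zs (S (S n)) y) / h - F y (zstar y))) by (field; auto).
  rewrite Heq. replace (F c (zs (S n) c) * (y + h - y) / h) with (F c (zs (S n) c)) by (field; auto).
  eapply Rle_lt_trans; [apply Rabs_triang|].
  eapply Rle_lt_trans; [apply Rplus_le_compat_r, Rabs_triang|].
  unfold Rdiv. rewrite !Rabs_mult, Rabs_inv.
  rewrite Rabs_minus_sym in E2, E3.
  assert (Rabs (zstar (y + h) - zs (S (S n)) (y + h)) * / Rabs h <= eps / 8).
  { apply (Rmult_le_reg_r (Rabs h)); auto. rewrite Rmult_assoc, Rinv_l by lra. 
    replace (eps / 8 * Rabs h) with (eps * Rabs h / 8) by field. lra. }
  assert (Rabs (zstar y - zs (S (S n)) y) * / Rabs h <= eps / 8).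
  { apply (Rmult_le_reg_r (Rabs h)); auto. rewrite Rmult_assoc, Rinv_l by lra. 
    replace (eps / 8 * Rabs h) with (eps * Rabs h / 8) by field. lra. }
  rewrite Rabs_Ropp, Rabs_mult, Rabs_inv. lra.
Qed.

Lemma zstar_0 : zstar 0 = 0.
Proof.
  pose proof (zstar_lim 0 (Rle_refl 0)) as H2.
  apply is_lim_seq_incr_1 in H2.
  assert (H3 : is_lim_seq (fun n : nat => zs (S n) 0) 0).
  { eapply is_lim_seq_ext; [|apply is_lim_seq_const]. intros n; simpl. rewrite RInt_point. reflexivity. }
  apply is_lim_seq_unique in H2. apply is_lim_seq_unique in H3. rewrite H2 in H3. injection H3; auto.
Qed.
End Iteration.

Lemma der_nonpos_mono (phi dphi : R -> R) y :
  0 <= y -> (forall x, is_derive phi x (dphi x)) -> (forall x, 0 <= x -> dphi x <= 0) -> phi y <= phi 0.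
Proof.
  intros Hy Hd Hn. destruct (Req_dec y 0) as [->|Hy0]; [lra|].
  destruct (MVT_gen phi 0 y dphi) as [c [Hc Heq]].
  - intros; apply Hd.
  - intros; apply continuity_pt_filterlim. apply exd_cont. eexists; apply Hd.
  - rewrite Rmin_left in Hc by lra. rewrite Rmax_right in Hc by lra.
    assert (dphi c <= 0) by (apply Hn; lra).
    assert (dphi c * (y - 0) <= 0) by (apply Rmult_le_0_r; lra). lra.
Qed.

Lemma le_RInt_of_der (f df G : R -> R) :
  (forall x, is_derive f x (df x)) -> (forall x, continuous G x) ->
  (forall x, 0 <= x -> df x <= G x) -> f 0 <= 0 ->
  forall y, 0 <= y -> f y <= RInt G 0 y.
Proof.
  intros Hd HG Hle H0 y Hy.
  assert (HR : forall x, is_derive (fun x => RInt G 0 x) x (G x)).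
  { intros x. apply (is_derive_RInt G _ 0).
    - exists (mkposreal 1 Rlt_0_1). intros b _. apply (RInt_correct (V:=R_CompleteNormedModule)).
      apply (ex_RInt_continuous (V:=R_CompleteNormedModule)). intros; auto.
    - auto. }
  assert (Hm := der_nonpos_mono (fun x => f x - RInt G 0 x) (fun x => df x - G x) y Hy).
  simpl in Hm. rewrite RInt_point in Hm. 
  assert (f y - RInt G 0 y <= f 0 - zero).
  { apply Hm.
    - intros x. apply (is_derive_minus f (fun x => RInt G 0 x)); auto.
    - intros x Hx; specialize (Hle x Hx); lra. }
  unfold zero in H; simpl in H. lra.
Qed.

Lemma ge_RInt_of_der (f df G : R -> R) :
  (forall x, is_derive f x (df x)) -> (forall x, continuous G x) ->
  (forall x, 0 <= x -> G x <= df x) -> 0 <= f 0 ->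
  forall y, 0 <= y -> RInt G 0 y <= f y.
Proof.
  intros Hd HG Hle H0 y Hy.
  assert (HR : forall x, is_derive (fun x => RInt G 0 x) x (G x)).
  { intros x. apply (is_derive_RInt G _ 0).
    - exists (mkposreal 1 Rlt_0_1). intros b _. apply (RInt_correct (V:=R_CompleteNormedModule)).
      apply (ex_RInt_continuous (V:=R_CompleteNormedModule)). intros; auto.
    - auto. }
  assert (Hm := der_nonpos_mono (fun x => RInt G 0 x - f x) (fun x => G x - df x) y Hy).
  simpl in Hm. rewrite RInt_point in Hm. 
  assert (RInt G 0 y - f y <= zero - f 0).
  { apply Hm.
    - intros x. apply (is_derive_minus (fun x => RInt G 0 x) f); auto.
    - intros x Hx; specialize (Hle x Hx); lra. }
  unfold zero in H; simpl in H. lra.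
Qed.

Lemma ba_add a b A B : Rabs a <= A -> Rabs b <= B -> Rabs (a + b) <= A + B.
Proof. intros; eapply Rle_trans; [apply Rabs_triang|lra]. Qed.
Lemma ba_sub a b A B : Rabs a <= A -> Rabs b <= B -> Rabs (a - b) <= A + B.
Proof. intros; eapply Rle_trans; [apply Rabs_triang|]. rewrite Rabs_Ropp; lra. Qed.
Lemma ba_mul a b A B : Rabs a <= A -> Rabs b <= B -> Rabs (a * b) <= A * B.
Proof. intros; rewrite Rabs_mult; apply Rmult_le_compat; auto; apply Rabs_pos. Qed.
Lemma ba_opp a A : Rabs a <= A -> Rabs (- a) <= A.
Proof. rewrite Rabs_Ropp; auto. Qed.
Lemma ba_pow a n A : Rabs a <= A -> Rabs (a ^ n) <= A ^ n.
Proof. intros; rewrite <- RPow_abs; apply pow_incrst_1 || (apply pow_maj_Rabs; rewrite Rabs_Rabsolu; auto). Qed.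
Lemma ba_num (x : R) : 0 <= x -> Rabs x <= x.
Proof. intros; rewrite Rabs_right; lra. Qed.

Lemma ba_numneg (x : R) : x <= 0 -> Rabs x <= - x.
Proof. intros; rewrite Rabs_left1; lra. Qed.

Ltac babs :=
  match goal with
  | |- Rabs (?a + ?b) <= _ => eapply ba_add; [babs|babs]
  | |- Rabs (?a - ?b) <= _ => eapply ba_sub; [babs|babs]
  | |- Rabs (?a * ?b) <= _ => eapply ba_mul; [babs|babs]
  | |- Rabs (- ?a) <= _ => eapply ba_opp; babs
  | |- Rabs (?a ^ ?n) <= _ => eapply ba_pow; babs
  | |- Rabs ?x <= _ => first [eassumption | (apply ba_num; lra) | (apply ba_numneg; lra)]
  end.



Definition Q0f (y rho H B I : R) := (I^2 + 8*B^2 + 10*rho*B*I + 5*y*B*I^2 + 4*y*B^3 + 16*y*rho*B^2*I + 8*y^2*B^2*I^2 + 8*y^2*rho*B^3*I + 4*y^3*B^3*I^2).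
Definition Tpf (y rho H K B I : R) := (22*K*B + 14*rho*K*I + 7*y*K*I^2 + 16*y*K*B^2 + 15*y*K^2 + 44*y*rho*K*B*I + 22*y^2*K*B*I^2 + 21*y^2*K^2*B + 32*y^2*rho*K*B^2*I + 30*y^2*rho*K^2*I + 16*y^3*K*B^2*I^2 + 15*y^3*K^2*I^2 + 9*y^3*K^3 + 42*y^3*rho*K^2*B*I + 21*y^4*K^2*B*I^2 + 18*y^4*rho*K^3*I + 9*y^5*K^3*I^2).
Definition Tmf (y rho H K B I : R) := (- 22*K*B - 14*rho*K*I - 7*y*K*I^2 - 16*y*K*B^2 + 15*y*K^2 - 44*y*rho*K*B*I - 22*y^2*K*B*I^2 + 21*y^2*K^2*B - 32*y^2*rho*K*B^2*I + 30*y^2*rho*K^2*I - 16*y^3*K*B^2*I^2 + 15*y^3*K^2*I^2 - 9*y^3*K^3 + 42*y^3*rho*K^2*B*I + 21*y^4*K^2*B*I^2 - 18*y^4*rho*K^3*I - 9*y^5*K^3*I^2).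
Definition Af (y rho H B I : R) := (- 2*I^2 - 16*B^2 - 20*rho*B*I - 16*y*B*I^2 - 20*y*B^3 - 58*y*rho*B^2*I - 42*y^2*B^2*I^2 - 8*y^2*B^4 - 64*y^2*rho*B^3*I - 44*y^3*B^3*I^2 - 24*y^3*rho*B^4*I - 16*y^4*B^4*I^2).
Definition Bthf (y rho H B I th e1 e2 : R) := (- 6*B - 8*B*e1 - 4*B*th - 4*B*th*e1 - 4*H*B - 4*rho*I - 8*rho*I*e1 - 4*rho*I*e1^2 - 2*rho*I*th - 4*rho*I*th*e1 - 2*rho*I*th*e1^2 - 4*y*I^2 - 8*y*I^2*e1 - 4*y*I^2*e1^2 - 2*y*I^2*th - 4*y*I^2*th*e1 - 2*y*I^2*th*e1^2 - 24*y*B^2 - 8*y*B^2*e1 - 8*y*B^2*th - 36*y*rho*B*I - 40*y*rho*B*I*e1 - 4*y*rho*B*I*e1^2 - 16*y*rho*B*I*th - 16*y*rho*B*I*th*e1 - 28*y^2*B*I^2 - 32*y^2*B*I^2*e1 - 4*y^2*B*I^2*e1^2 - 12*y^2*B*I^2*th - 12*y^2*B*I^2*th*e1 - 16*y^2*B^3 - 80*y^2*rho*B^2*I - 32*y^2*rho*B^2*I*e1 - 24*y^2*rho*B^2*I*th - 56*y^3*B^2*I^2 - 24*y^3*B^2*I^2*e1 - 16*y^3*B^2*I^2*th - 48*y^3*rho*B^3*I - 32*y^4*B^3*I^2).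
Definition Be1f (y rho H B I th e1 e2 : R) := (e2 - 5*B - 2*H*e2 + 2*H*B - 4*rho*I - 2*rho*I*e1 - 4*y*I^2 - 2*y*I^2*e1 - 8*y*B^2 - 24*y*rho*B*I - 4*y*rho*B*I*e1 - 20*y^2*B*I^2 - 4*y^2*B*I^2*e1 - 4*y^2*B^3 - 36*y^2*rho*B^2*I - 2*y^2*rho*B^2*I*e1 - 28*y^3*B^2*I^2 - 2*y^3*B^2*I^2*e1 - 16*y^3*rho*B^3*I - 12*y^4*B^3*I^2).
Definition Be2f (y rho H B I th e1 e2 : R) := (1 - 2*H + 2*y*B - 4*y*H*B).

Lemma Q0_bnd y rho H B I : Rabs y <= 1 -> Rabs rho <= 1 -> Rabs H <= 1 -> Rabs B <= 1 -> Rabs I <= 1 ->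
  Rabs (Q0f y rho H B I) <= 100.
Proof. intros. unfold Q0f. eapply Rle_trans; [babs|]. lra. Qed.
Lemma A_bnd y rho H B I : Rabs y <= 1 -> Rabs rho <= 1 -> Rabs H <= 1 -> Rabs B <= 1 -> Rabs I <= 1 ->
  Rabs (Af y rho H B I) <= 400.
Proof. intros. unfold Af. eapply Rle_trans; [babs|]. lra. Qed.
Lemma Bth_bnd y rho H B I th e1 e2 : Rabs y <= 1 -> Rabs rho <= 1 -> Rabs H <= 1 -> Rabs B <= 1 -> Rabs I <= 1 ->
  Rabs th <= 1 -> Rabs e1 <= 1 -> Rabs e2 <= 1 -> Rabs (Bthf y rho H B I th e1 e2) <= 700.
Proof. intros. unfold Bthf. eapply Rle_trans; [babs|]. lra. Qed.
Lemma Be1_bnd y rho H B I th e1 e2 : Rabs y <= 1 -> Rabs rho <= 1 -> Rabs H <= 1 -> Rabs B <= 1 -> Rabs I <= 1 ->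
  Rabs th <= 1 -> Rabs e1 <= 1 -> Rabs e2 <= 1 -> Rabs (Be1f y rho H B I th e1 e2) <= 200.
Proof. intros. unfold Be1f. eapply Rle_trans; [babs|]. lra. Qed.
Lemma Be2_bnd y rho H B I th e1 e2 : Rabs y <= 1 -> Rabs rho <= 1 -> Rabs H <= 1 -> Rabs B <= 1 -> Rabs I <= 1 ->
  Rabs th <= 1 -> Rabs e1 <= 1 -> Rabs e2 <= 1 -> Rabs (Be2f y rho H B I th e1 e2) <= 10.
Proof. intros. unfold Be2f. eapply Rle_trans; [babs|]. lra. Qed.
Definition Wf (y rho H B I : R) := (3*B + 2*rho*I + y*I^2 + 2*y*B^2 + 6*y*rho*B*I + 3*y^2*B*I^2 + 4*y^2*rho*B^2*I + 2*y^3*B^2*I^2).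
Lemma W_bnd y rho H B I : Rabs y <= 1 -> Rabs rho <= 1 -> Rabs H <= 1 -> Rabs B <= 1 -> Rabs I <= 1 ->
  Rabs (Wf y rho H B I) <= 30.
Proof. intros. unfold Wf. eapply Rle_trans; [babs|]. lra. Qed.
Lemma W_id y rho H B I : (1 + 2*rho*y*I + y^2*I^2) * (1 + B*y) * (1 + 2*B*y) - 1 = y * Wf y rho H B I.
Proof. unfold Wf. ring. Qed.
Lemma qx_bnd y rho H B I : Rabs y <= 1 -> Rabs rho <= 1 -> Rabs H <= 1 -> Rabs B <= 1 -> Rabs I <= 1 ->
  Rabs ((1 + 2*rho*y*I + y^2*I^2) * (1 + 2*B*y)^2 - 2*H) <= 40.
Proof. intros. eapply Rle_trans; [babs|]. lra. Qed.
Lemma qx1_bnd y rho H B I : Rabs y <= 1 -> Rabs rho <= 1 -> Rabs H <= 1 -> Rabs B <= 1 -> Rabs I <= 1 ->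
  Rabs ((1 + 2*rho*y*I + y^2*I^2) * (1 + 2*B*y)) <= 12.
Proof. intros. eapply Rle_trans; [babs|]. lra. Qed.
Lemma Psi_id y rho H B I th :
  (1 + 2*rho*y*I + y^2*I^2) * (1 + B*y + th) * (1 + 2*B*y)^2 - (1 - 2*H) * (1 + 2*B*y) - (2*H) * (1 + B*y + th)
  = y * (3*B + 2*H*B + 2*rho*I) + y^2 * Q0f y rho H B I + th * ((1 + 2*rho*y*I + y^2*I^2) * (1 + 2*B*y)^2 - 2*H).
Proof. unfold Q0f. ring. Qed.
Lemma N_id y rho H B I th e1 e2 :
  (1 - 2*H) * (-B + e2) * (1 + 2*B*y + e1) - (1 + B*y + th)^2 * (2*rho*I + 2*y*I^2) * (1 + 2*B*y + e1)^2
   - 2*B * (2 * (1 + 2*rho*y*I + y^2*I^2) * (1 + 2*B*y + e1) * (1 + B*y + th)^2 - (1 - 2*H) * (1 + B*y + th))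
  = - (3*B + 2*H*B + 2*rho*I) + y * Af y rho H B I + th * Bthf y rho H B I th e1 e2
    + e1 * Be1f y rho H B I th e1 e2 + e2 * Be2f y rho H B I th e1 e2.
Proof. unfold Af, Bthf, Be1f, Be2f. ring. Qed.

Definition qf (H rho y : R) := 1 + 2 * rho * (y / (2 * H + 1)) + y ^ 2 / (2 * H + 1) ^ 2.
Definition bb (H : R) := 2 * H.
Definition cc (H : R) := 1 - 2 * H.
Definition Fz (H rho y z : R) :=
  (cc H * y + sqrt (cc H ^ 2 * y ^ 2 + 4 * bb H * qf H rho y * z)) / qf H rho y.

Definition PS (H rho : R) (h : R -> R) : Prop :=
  h 0 = 0 /\
  (forall e, 0 < e -> exists d, 0 < d /\ forall y, 0 <= y < d -> Rabs (h y) < e) /\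
  (forall y, 0 < y -> 0 < h y /\ ex_derive h y /\ 0 < Derive h y /\
     qf H rho y * (Derive h y) ^ 2 - cc H * (y / h y) * Derive h y - bb H = 0).

Section Pos.
Variables H rho : R.
Hypothesis hH : 0 < H <= 1/2.
Hypothesis hr : -1 < rho < 1.

Lemma q_lower y : 1 - rho ^ 2 <= qf H rho y.
Proof.
  unfold qf. set (w := y / (2 * H + 1)).
  replace (y ^ 2 / (2 * H + 1) ^ 2) with (w ^ 2) by (unfold w; field; lra).
  pose proof (pow2_ge_0 (rho + w)). nra.
Qed.

Lemma q_pos y : 0 < qf H rho y.
Proof. pose proof (q_lower y). nra. Qed.

Lemma q_upper y : qf H rho y <= 2 * (1 + y ^ 2).
Proof.
  unfold qf. set (w := y / (2 * H + 1)).
  replace (y ^ 2 / (2 * H + 1) ^ 2) with (w ^ 2) by (unfold w; field; lra).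
  assert (w ^ 2 <= y ^ 2).
  { assert (w ^ 2 * (2*H+1)^2 = y^2) by (unfold w; field; lra).
    assert (1 <= (2*H+1)^2) by nra.
    assert (0 <= w^2 * ((2*H+1)^2 - 1)) by (apply Rmult_le_pos; nra). nra. }
  pose proof (pow2_ge_0 (1 - w)). pose proof (pow2_ge_0 (1 + w)). nra.
Qed.

Lemma q_cont y : continuous (qf H rho) y.
Proof. apply exd_cont. unfold qf. auto_derive. lra. Qed.

Lemma Fz_cont y z : continuous (fun p : R * R => Fz H rho (fst p) (snd p)) (y, z).
Proof.
  unfold Fz. apply cU_div.
  - apply cU_plus. apply cU_mult. apply cU_const. apply c_fst.
    apply cU_sqrt. apply cU_plus. apply cU_mult. apply cU_const. apply cU_pow, c_fst.
    apply cU_mult. apply cU_mult. apply cU_const. apply (cU_comp (fun p : R*R => fst p)). apply c_fst. apply q_cont.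
    apply c_snd.
  - apply (cU_comp (fun p : R*R => fst p)). apply c_fst. apply q_cont.
  - simpl. pose proof (q_pos y). lra.
Qed.

Lemma Fz_mono y z1 z2 : 0 <= y -> z1 <= z2 -> Fz H rho y z1 <= Fz H rho y z2.
Proof.
  intros Hy Hz. unfold Fz. unfold Rdiv. apply Rmult_le_compat_r.
  left; apply Rinv_0_lt_compat, q_pos.
  apply Rplus_le_compat_l. apply sqrt_le_1_alt.
  pose proof (q_pos y). unfold bb. assert (0 <= 4 * (2 * H) * qf H rho y) by nra. nra.
Qed.

Definition usub (y : R) := H * y ^ 2 / (1 + y ^ 2).
Definition vsup (y : R) := y ^ 2 / (1 - rho ^ 2).

Lemma usub_der x : is_derive usub x (2 * H * x / (1 + x ^ 2) ^ 2).
Proof. unfold usub. auto_derive. nra. field. nra. Qed.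
Lemma vsup_der x : is_derive vsup x (2 * x / (1 - rho ^ 2)).
Proof. unfold vsup. auto_derive. nra. field. nra. Qed.

Lemma usub_sub x : 0 <= x -> 2 * H * x / (1 + x ^ 2) ^ 2 <= Fz H rho x (usub x).
Proof.
  intros Hx. pose proof (q_pos x) as Hq. pose proof (q_upper x) as Hq2.
  set (q := qf H rho x) in *. unfold Fz. fold q.
  set (p := 2 * H * x / (1 + x ^ 2) ^ 2).
  assert (Hp : 0 <= p) by (unfold p; apply Rdiv_le_0_compat; nra).
  apply (Rmult_le_reg_r q); auto. unfold Rdiv. rewrite Rmult_assoc, Rinv_l, Rmult_1_r by lra.
  assert (p * q <= sqrt (4 * bb H * q * usub x)).
  { rewrite <- (sqrt_pow2 (p * q)) by nra. apply sqrt_le_1_alt.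
    unfold p, usub, bb.
    assert (0 < 1 + x ^ 2) by nra.
    assert (q <= 2 * (1 + x^2) ^ 3) by nra.
    replace ((2 * H * x / (1 + x ^ 2) ^ 2 * q) ^ 2) with
      (4 * H ^ 2 * x ^ 2 * q * (q / (1 + x ^ 2) ^ 4)) by (field; lra).
    replace (4 * (2 * H) * q * (H * x ^ 2 / (1 + x ^ 2))) with
      (4 * H ^ 2 * x ^ 2 * q * (2 / (1 + x ^ 2))) by (field; lra).
    apply Rmult_le_compat_l. apply Rmult_le_pos; [|lra]. apply Rmult_le_pos; [|nra]. nra.
    apply (Rmult_le_reg_r ((1 + x ^ 2) ^ 4)). nra.
    replace (q / (1 + x ^ 2) ^ 4 * (1 + x ^ 2) ^ 4) with q by (field; lra).
    replace (2 / (1 + x ^ 2) * (1 + x ^ 2) ^ 4) with (2 * (1 + x ^ 2) ^ 3) by (field; lra). lra. }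
  assert (sqrt (4 * bb H * q * usub x) <= sqrt (cc H ^ 2 * x ^ 2 + 4 * bb H * q * usub x)).
  { apply sqrt_le_1_alt. nra. }
  assert (0 <= cc H * x) by (unfold cc; nra). lra.
Qed.

Lemma vsup_sup x : 0 <= x -> Fz H rho x (vsup x) <= 2 * x / (1 - rho ^ 2).
Proof.
  intros Hx. pose proof (q_pos x) as Hq. pose proof (q_lower x) as Hq1.
  set (q := qf H rho x) in *. unfold Fz. fold q.
  set (M := / (1 - rho ^ 2)).
  assert (HM : 0 < M) by (unfold M; apply Rinv_0_lt_compat; nra).
  assert (HMq : 1 <= M * q).
  { unfold M. apply (Rmult_le_reg_l (1 - rho^2)). nra. field_simplify; nra. }
  replace (2 * x / (1 - rho ^ 2)) with (2 * M * x) by (unfold M; field; nra).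
  replace (vsup x) with (M * x ^ 2) by (unfold vsup, M; field; nra).
  apply (Rmult_le_reg_r q); auto. unfold Rdiv. rewrite Rmult_assoc, Rinv_l, Rmult_1_r by lra.
  assert (sqrt (cc H ^ 2 * x ^ 2 + 4 * bb H * q * (M * x ^ 2)) <= x * (2 * M * q - cc H)).
  { assert (0 <= x * (2 * M * q - cc H)) by (unfold cc; nra).
    rewrite <- (sqrt_pow2 (x * (2 * M * q - cc H))) by auto. apply sqrt_le_1_alt.
    unfold cc, bb. 
    assert ((x * (2 * M * q - (1 - 2 * H))) ^ 2 - ((1 - 2 * H) ^ 2 * x ^ 2 + 4 * (2 * H) * q * (M * x ^ 2))
       = 4 * x ^ 2 * M * q * (M * q - 1)) by ring.
    assert (0 <= 4 * x ^ 2 * M * q * (M * q - 1)).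
    { apply Rmult_le_pos; [|lra]. apply Rmult_le_pos; [|lra]. apply Rmult_le_pos; [|lra]. nra. }
    lra. }
  nra.
Qed.

Lemma usub_cont y : continuous usub y.
Proof. apply exd_cont. eexists. apply usub_der. Qed.
Lemma vsup_cont y : continuous vsup y.
Proof. apply exd_cont. eexists. apply vsup_der. Qed.

Lemma uv_le y : 0 <= y -> usub y <= vsup y.
Proof.
  intros Hy. unfold usub, vsup.
  assert (0 < 1 - rho ^ 2) by nra.
  assert (0 < 1 + y ^ 2) by nra.
  apply (Rmult_le_reg_r ((1 + y^2) * (1 - rho^2))). nra.
  replace (H * y ^ 2 / (1 + y ^ 2) * ((1 + y ^ 2) * (1 - rho ^ 2))) with (H * y^2 * (1 - rho^2)) by (field; lra).
  replace (y ^ 2 / (1 - rho ^ 2) * ((1 + y ^ 2) * (1 - rho ^ 2))) with (y^2 * (1 + y^2)) by (field; lra).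
  assert (0 <= y^2) by nra. assert (H*(1-rho^2) <= 1 + y^2) by nra.
  assert (0 <= y^2 * (1 + y^2 - H*(1-rho^2))) by (apply Rmult_le_pos; nra). nra.
Qed.

Lemma hsub_int y : 0 <= y -> usub y <= RInt (fun t => Fz H rho t (usub t)) 0 y.
Proof.
  apply (le_RInt_of_der usub (fun x => 2 * H * x / (1 + x ^ 2) ^ 2)).
  - apply usub_der.
  - intros x. apply (contF (Fz H rho)). intros; apply Fz_cont. apply usub_cont.
  - apply usub_sub.
  - unfold usub. simpl. lra.
Qed.

Lemma hsup_int y : 0 <= y -> RInt (fun t => Fz H rho t (vsup t)) 0 y <= vsup y.
Proof.
  apply (ge_RInt_of_der vsup (fun x => 2 * x / (1 - rho ^ 2))).
  - apply vsup_der.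
  - intros x. apply (contF (Fz H rho)). intros; apply Fz_cont. apply vsup_cont.
  - apply vsup_sup.
  - unfold vsup. simpl. assert (0 < 1 - rho^2) by nra. apply Rmult_le_pos; [lra|]. left; apply Rinv_0_lt_compat; lra.
Qed.

Definition zp := zstar (Fz H rho) usub.

Lemma zp_bounds y : 0 <= y -> usub y <= zp y <= vsup y.
Proof.
  exact (zstar_bounds (Fz H rho) usub vsup (fun y z => Fz_cont y z)
   (fun y z1 z2 Hy Hz => Fz_mono y z1 z2 Hy Hz) usub_cont vsup_cont uv_le hsub_int hsup_int y).
Qed.

Lemma zp_der y : 0 < y -> is_derive zp y (Fz H rho y (zp y)).
Proof.
  exact (zstar_der (Fz H rho) usub vsup (fun y z => Fz_cont y z)
   (fun y z1 z2 Hy Hz => Fz_mono y z1 z2 Hy Hz) usub_cont vsup_cont uv_le hsub_int hsup_int y).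
Qed.

Lemma zp_0 : zp 0 = 0.
Proof.
  exact (zstar_0 (Fz H rho) usub vsup (fun y z => Fz_cont y z)
   (fun y z1 z2 Hy Hz => Fz_mono y z1 z2 Hy Hz) usub_cont vsup_cont uv_le hsub_int hsup_int).
Qed.


Definition hp (y : R) := sqrt (zp y).

Lemma F_rel y z : 0 <= y -> 0 <= z ->
  qf H rho y * (Fz H rho y z) ^ 2 - 2 * cc H * y * Fz H rho y z - 4 * bb H * z = 0.
Proof.
  intros Hy Hz. pose proof (q_pos y) as Hq. set (q := qf H rho y) in *.
  unfold Fz; fold q. set (c := cc H). set (b := bb H).
  assert (Ha : 0 <= c ^ 2 * y ^ 2 + 4 * b * q * z).
  { unfold b, bb. assert (0 <= 4 * (2*H) * q * z) by (apply Rmult_le_pos; [|lra]; apply Rmult_le_pos; lra). assert (0 <= c ^ 2 * y ^ 2) by (apply Rmult_le_pos; apply pow2_ge_0). lra. }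
  set (S := sqrt (c ^ 2 * y ^ 2 + 4 * b * q * z)).
  assert (HS : S * S = c ^ 2 * y ^ 2 + 4 * b * q * z) by (apply sqrt_sqrt; auto).
  apply (Rmult_eq_reg_l q); [|lra].
  replace (q * (q * ((c * y + S) / q) ^ 2 - 2 * c * y * ((c * y + S) / q) - 4 * b * z))
    with (S * S - c ^ 2 * y ^ 2 - 4 * b * q * z) by (field; lra).
  lra.
Qed.

Lemma F_pos y z : 0 <= y -> 0 < z -> 0 < Fz H rho y z.
Proof.
  intros Hy Hz. pose proof (q_pos y) as Hq. unfold Fz.
  apply Rdiv_lt_0_compat; auto.
  assert (0 < sqrt (cc H ^ 2 * y ^ 2 + 4 * bb H * qf H rho y * z)).
  { apply sqrt_lt_R0. unfold bb. assert (0 < 4 * (2*H) * qf H rho y * z) by (repeat apply Rmult_lt_0_compat; lra). nra. }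
  assert (0 <= cc H * y) by (unfold cc; nra). lra.
Qed.

Lemma hp_PS : PS H rho hp.
Proof.
  split; [|split].
  - unfold hp. rewrite zp_0. apply sqrt_0.
  - intros e He. assert (H1 : 0 < 1 - rho ^ 2) by nra.
    exists (e * (1 - rho ^ 2)). split; [nra|]. intros y [Hy0 Hy].
    unfold hp. rewrite Rabs_right by (apply Rle_ge, sqrt_pos).
    rewrite <- (sqrt_pow2 e) by lra. apply sqrt_lt_1_alt. split; [destruct (zp_bounds y Hy0) as [Hb1 Hb2]; assert (0 <= usub y) by (unfold usub; apply Rdiv_le_0_compat; nra); lra|].
    assert (zp y <= vsup y) by apply (zp_bounds y Hy0).
    unfold vsup in H0.
    assert (y ^ 2 < (e * (1 - rho ^ 2)) ^ 2) by nra.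
    assert (y ^ 2 / (1 - rho ^ 2) < e ^ 2).
    { apply (Rmult_lt_reg_r (1 - rho^2)); auto. unfold Rdiv. rewrite Rmult_assoc, Rinv_l, Rmult_1_r by lra.
      assert (1 - rho ^2 <= 1) by nra. 
      assert ((e * (1 - rho ^ 2)) ^ 2 = e^2 * (1 - rho^2) * (1 - rho^2)) by ring.
      assert (e^2 * (1 - rho^2) * (1 - rho^2) <= e^2 * (1 - rho^2)).
      { rewrite <- (Rmult_1_r (e^2 * (1 - rho^2))) at 2. apply Rmult_le_compat_l; nra. }
      lra. }
    lra.
  - intros y Hy.
    assert (Hz : 0 < zp y).
    { eapply Rlt_le_trans; [|apply (zp_bounds y (Rlt_le _ _ Hy))]. unfold usub.
      apply Rdiv_lt_0_compat; [|nra]. apply Rmult_lt_0_compat; [lra|]. nra. }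
    assert (Hd : is_derive hp y (Fz H rho y (zp y) / (2 * sqrt (zp y)))).
    { apply (is_derive_sqrt zp y); auto. apply zp_der; auto. }
    assert (Hs : 0 < sqrt (zp y)) by (apply sqrt_lt_R0; auto).
    rewrite (is_derive_unique _ _ _ Hd).
    assert (HF := F_pos y (zp y) (Rlt_le _ _ Hy) Hz).
    split; [exact Hs|split; [eexists; exact Hd|split]].
    + apply Rdiv_lt_0_compat; lra.
    + pose proof (F_rel y (zp y) (Rlt_le _ _ Hy) (Rlt_le _ _ Hz)) as Hrel.
      fold (hp y) in *. assert (Hh : hp y * hp y = zp y) by (apply sqrt_sqrt; lra).
      rewrite <- Hh in Hrel |- *.
      set (F := Fz H rho y (hp y * hp y)) in *. set (h := hp y) in *.
      replace (qf H rho y * (F / (2 * h)) ^ 2 - cc H * (y / h) * (F / (2 * h)) - bb H)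
        with ((qf H rho y * F ^ 2 - 2 * cc H * y * F - 4 * bb H * (h * h)) / (4 * h * h)) by (field; lra).
      rewrite Hrel. unfold Rdiv. ring.
Qed.
End Pos.

Lemma cmp_pure (phi : R -> R) (Y : R) :
  phi 0 <= 0 ->
  (forall e, 0 < e -> exists d, 0 < d /\ forall y, 0 <= y < d -> phi y < e) ->
  (forall y, 0 < y <= Y -> ex_derive phi y) ->
  (forall y, 0 < y <= Y -> 0 < phi y -> Derive phi y <= 0) ->
  forall y, 0 <= y <= Y -> phi y <= 0.
Proof.
  intros H0 Hrc Hd Hn y1 Hy1.
  destruct (Rle_or_lt (phi y1) 0) as [|Hpos]; [auto|exfalso].
  assert (Hy1p : 0 < y1) by (destruct (Req_dec y1 0) as [->|]; lra).
  set (S := fun t => 0 <= t <= y1 /\ phi t <= 0).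
  assert (Hb : bound S) by (exists y1; intros t [Ht _]; lra).
  assert (Hne : exists t, S t) by (exists 0; split; lra).
  destruct (completeness S Hb Hne) as [t0 [Hub Hlub]].
  assert (Ht00 : 0 <= t0) by (apply Hub; split; lra).
  assert (Ht0y : t0 <= y1) by (apply Hlub; intros t [Ht _]; lra).
  assert (HA : forall t, t0 < t <= y1 -> 0 < phi t).
  { intros t Ht. destruct (Rle_or_lt (phi t) 0) as [Hle|]; auto.
    assert (t <= t0) by (apply Hub; split; [lra|auto]). lra. }
  assert (Hcont : forall t, 0 < t <= Y -> continuous phi t) by (intros; apply exd_cont, Hd; auto).
  assert (HB : forall t, t0 < t < y1 -> phi y1 <= phi t).
  { intros t Ht.
    destruct (MVT_gen phi t y1 (Derive phi)) as [c [Hc Heq]].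
    - intros x Hx. rewrite Rmin_left in Hx by lra. rewrite Rmax_right in Hx by lra.
      apply Derive_correct; apply Hd; lra.
    - intros x Hx. rewrite Rmin_left in Hx by lra. rewrite Rmax_right in Hx by lra.
      apply continuity_pt_filterlim, Hcont; lra.
    - rewrite Rmin_left in Hc by lra. rewrite Rmax_right in Hc by lra.
      assert (Derive phi c <= 0) by (apply Hn; [lra| apply HA; lra]).
      assert (Derive phi c * (y1 - t) <= 0) by (apply Rmult_le_0_r; lra). lra. }
  destruct (Req_dec t0 0) as [Ht0|Ht0].
  - destruct (Hrc (phi y1) Hpos) as [d [Hd0 Hdd]].
    set (t := Rmin d y1 / 2).
    assert (0 < Rmin d y1) by (apply Rmin_glb_lt; lra). assert (0 < t) by (unfold t; lra).
    assert (t < d) by (unfold t; pose proof (Rmin_l d y1); lra).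
    assert (t < y1) by (unfold t; pose proof (Rmin_r d y1); lra).
    assert (phi t < phi y1) by (apply Hdd; lra).
    assert (phi y1 <= phi t) by (apply HB; lra). lra.
  - assert (Ht0p : 0 < t0) by lra.
    assert (Hct := Hcont t0 ltac:(lra)).
    assert (Hphi0 : phi t0 <= 0).
    { destruct (Rle_or_lt (phi t0) 0) as [|Hp]; auto. exfalso.
      destruct (cont_eps phi t0 Hct (phi t0) Hp) as [d [Hd0 Hdd]].
      assert (t0 <= t0 - d / 2).
      { apply Hlub. intros s [Hs Hps].
        destruct (Rle_or_lt s (t0 - d/2)) as [|Hlt]; auto.
        assert (s <= t0) by (apply Hub; split; auto).
        assert (Rabs (s - t0) < d) by (apply Rabs_def1; lra).
        specialize (Hdd s H1). apply Rabs_def2 in Hdd. lra. }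
      lra. }
    assert (Ht0y1 : t0 < y1) by (destruct (Req_dec t0 y1); [subst; lra|lra]).
    destruct (cont_eps phi t0 Hct (phi y1 - phi t0) ltac:(lra)) as [d [Hd0 Hdd]].
    set (t := t0 + Rmin d (y1 - t0) / 2).
    assert (0 < Rmin d (y1 - t0)) by (apply Rmin_glb_lt; lra).
    pose proof (Rmin_l d (y1 - t0)). pose proof (Rmin_r d (y1 - t0)).
    assert (Rabs (t - t0) < d) by (unfold t; apply Rabs_def1; lra).
    specialize (Hdd t H3). apply Rabs_def2 in Hdd.
    assert (phi y1 <= phi t) by (apply HB; unfold t; lra). lra.
Qed.

Lemma key_alg q b c k1 k2 p1 p2 : 0 < q -> 0 < b -> 0 <= c -> k1 <= k2 -> 0 < p2 ->
  q * p1 ^ 2 - c * k1 * p1 - b <= 0 -> 0 <= q * p2 ^ 2 - c * k2 * p2 - b -> p1 <= p2.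
Proof.
  intros Hq Hb Hc Hk Hp2 H1 H2.
  destruct (Rle_or_lt p1 p2) as [|Hlt]; auto. exfalso.
  assert (c * k1 * p1 <= c * k2 * p1) by (apply Rmult_le_compat_r; [lra|]; apply Rmult_le_compat_l; lra).
  assert ((q * p1 ^ 2 - b) * p2 <= c * k2 * p1 * p2) by (apply Rmult_le_compat_r; lra).
  assert (c * k2 * p2 * p1 <= (q * p2 ^ 2 - b) * p1) by (apply Rmult_le_compat_r; lra).
  assert (0 < (p1 - p2) * (q * p1 * p2 + b)).
  { apply Rmult_lt_0_compat; [lra|]. assert (0 < q * p1 * p2) by (repeat apply Rmult_lt_0_compat; lra). lra. }
  nra.
Qed.

Lemma cmp_ode (qq : R -> R) (b c : R) (h1 h2 : R -> R) (Y : R) :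
  0 < b -> 0 <= c -> (forall y, 0 < qq y) ->
  h1 0 = 0 -> h2 0 = 0 ->
  (forall e, 0 < e -> exists d, 0 < d /\ forall y, 0 <= y < d -> Rabs (h1 y) < e) ->
  (forall e, 0 < e -> exists d, 0 < d /\ forall y, 0 <= y < d -> Rabs (h2 y) < e) ->
  (forall y, 0 < y <= Y -> 0 < h1 y /\ 0 < h2 y /\ ex_derive h1 y /\ ex_derive h2 y /\
      qq y * (Derive h1 y) ^ 2 - c * (y / h1 y) * Derive h1 y - b <= 0 /\
      0 < Derive h2 y /\ 0 <= qq y * (Derive h2 y) ^ 2 - c * (y / h2 y) * Derive h2 y - b) ->
  forall y, 0 <= y <= Y -> h1 y <= h2 y.
Proof.
  intros Hb Hc Hq H10 H20 Hc1 Hc2 Hy y Hyy.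
  assert (h1 y - h2 y <= 0); [|lra].
  apply (cmp_pure (fun t => h1 t - h2 t) Y); auto.
  - simpl. lra.
  - intros e He. destruct (Hc1 (e/2) ltac:(lra)) as [d1 [Hd1 Hd1']].
    destruct (Hc2 (e/2) ltac:(lra)) as [d2 [Hd2 Hd2']].
    exists (Rmin d1 d2). split; [apply Rmin_glb_lt; auto|]. intros t Ht.
    pose proof (Rmin_l d1 d2). pose proof (Rmin_r d1 d2).
    specialize (Hd1' t ltac:(lra)). specialize (Hd2' t ltac:(lra)).
    apply Rabs_def2 in Hd1'. apply Rabs_def2 in Hd2'. lra.
  - intros t Ht. destruct (Hy t Ht) as (_ & _ & D1 & D2 & _).
    apply (ex_derive_minus h1 h2); auto.
  - intros t Ht Hpos. destruct (Hy t Ht) as (P1 & P2 & D1 & D2 & S1 & Q2 & S2).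
    rewrite Derive_minus by auto.
    assert (Derive h1 t <= Derive h2 t); [|lra].
    apply (key_alg (qq t) b c (t / h1 t) (t / h2 t)); auto.
    unfold Rdiv. apply Rmult_le_compat_l; [lra|]. apply Rinv_le_contravar; lra.
Qed.


Lemma R_id_p (y rho H K B I : R) :
  (1 + 2*rho*y*I + y^2*I^2) * (1 + B*y + K*y^2) * (1 + 2*B*y + 3*K*y^2) ^ 2
   - (1 - 2*H) * (1 + 2*B*y + 3*K*y^2) - (2*H) * (1 + B*y + K*y^2)
  = y * (3*B + 2*H*B + 2*rho*I) + y^2 * (Q0f y rho H B I + (4 + 4*H) * K + y * Tpf y rho H K B I).
Proof. unfold Q0f, Tpf. ring. Qed.

Lemma R_id_m (y rho H K B I : R) :
  (1 + 2*rho*y*I + y^2*I^2) * (1 + B*y - K*y^2) * (1 + 2*B*y - 3*K*y^2) ^ 2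
   - (1 - 2*H) * (1 + 2*B*y - 3*K*y^2) - (2*H) * (1 + B*y - K*y^2)
  = y * (3*B + 2*H*B + 2*rho*I) + y^2 * (Q0f y rho H B I - (4 + 4*H) * K + y * Tmf y rho H K B I).
Proof. unfold Q0f, Tmf. ring. Qed.

Lemma abs_le x C : Rabs x <= C -> -C <= x <= C.
Proof. unfold Rabs; destruct (Rcase_abs x); lra. Qed.

Lemma cont0_bound (f : R -> R) : continuous f 0 ->
  exists d C, 0 < d /\ 0 <= C /\ forall y, Rabs y < d -> Rabs (f y) <= C.
Proof.
  intros Hc. destruct (cont_eps f 0 Hc 1 Rlt_0_1) as [d [Hd Hdd]].
  exists d, (Rabs (f 0) + 1). split; auto. split; [pose proof (Rabs_pos (f 0)); lra|].
  intros y Hy. specialize (Hdd y ltac:(rewrite Rminus_0_r; exact Hy)).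
  pose proof (Rabs_triang_inv (f y) (f 0)). lra.
Qed.

Lemma cont0_pos (f : R -> R) : continuous f 0 -> 0 < f 0 ->
  exists d, 0 < d /\ forall y, Rabs y < d -> f 0 / 2 < f y.
Proof.
  intros Hc Hp. destruct (cont_eps f 0 Hc (f 0 / 2) ltac:(lra)) as [d [Hd Hdd]].
  exists d. split; auto. intros y Hy. specialize (Hdd y ltac:(rewrite Rminus_0_r; exact Hy)).
  apply Rabs_def2 in Hdd. lra.
Qed.

Lemma Rmin_le_both x a b : x <= Rmin a b -> x <= a /\ x <= b.
Proof. intros; split; eapply Rle_trans; eauto; [apply Rmin_l|apply Rmin_r]. Qed.

Section Sand.
Variables H rho : R.
Hypothesis hH : 0 < H <= 1/2.
Hypothesis hr : -1 < rho < 1.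

Definition beta := -2 * rho / ((2 * H + 1) * (2 * H + 3)).
Definition Iv := / (2 * H + 1).

Lemma qf_I y : qf H rho y = 1 + 2*rho*y*Iv + y^2*Iv^2.
Proof. unfold qf, Iv. field. lra. Qed.

Lemma L_zero : 3*beta + 2*H*beta + 2*rho*Iv = 0.
Proof. unfold beta, Iv. field. lra. Qed.

Definition sm K y := 1 + beta*y - K*y^2.
Definition sp K y := 1 + beta*y + K*y^2.
Definition pm K y := 1 + 2*beta*y - 3*K*y^2.
Definition pp K y := 1 + 2*beta*y + 3*K*y^2.

Lemma subsup_exist : exists K Y, 0 < Y <= 1 /\ 0 <= K /\ forall y, 0 < y <= Y ->
  0 < sm K y /\ 0 < sp K y /\ 0 < pp K y /\
  qf H rho y * sm K y * (pm K y) ^ 2 - cc H * pm K y - bb H * sm K y <= 0 /\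
  0 <= qf H rho y * sp K y * (pp K y) ^ 2 - cc H * pp K y - bb H * sp K y.
Proof.
  destruct (cont0_bound (fun y => Q0f y rho H beta Iv)) as [d0 [C0 [Hd0 [HC0 HQ]]]].
  { apply exd_cont. unfold Q0f. auto_derive. auto. }
  set (K := (C0 + 1) / (4 + 4 * H)).
  assert (HK : 0 <= K) by (unfold K; apply Rdiv_le_0_compat; lra).
  assert (HK4 : (4 + 4*H) * K = C0 + 1) by (unfold K; field; lra).
  destruct (cont0_bound (fun y => Tpf y rho H K beta Iv)) as [d1 [C1 [Hd1 [HC1 HT1]]]].
  { apply exd_cont. unfold Tpf. auto_derive. auto. }
  destruct (cont0_bound (fun y => Tmf y rho H K beta Iv)) as [d2 [C2 [Hd2 [HC2 HT2]]]].
  { apply exd_cont. unfold Tmf. auto_derive. auto. }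
  destruct (cont0_pos (sm K)) as [d3 [Hd3 Hs3]].
  { apply exd_cont. unfold sm. auto_derive. auto. } { unfold sm. simpl. lra. }
  destruct (cont0_pos (sp K)) as [d4 [Hd4 Hs4]].
  { apply exd_cont. unfold sp. auto_derive. auto. } { unfold sp. simpl. lra. }
  destruct (cont0_pos (pp K)) as [d5 [Hd5 Hs5]].
  { apply exd_cont. unfold pp. auto_derive. auto. } { unfold pp. simpl. lra. }
  replace (sm K 0) with 1 in Hs3 by (unfold sm; ring).
  replace (sp K 0) with 1 in Hs4 by (unfold sp; ring).
  replace (pp K 0) with 1 in Hs5 by (unfold pp; ring).
  set (Y := Rmin (Rmin (Rmin d0 d1) (Rmin d2 d3)) (Rmin (Rmin d4 d5) (Rmin 1 (1 / (2 * (C1 + C2 + 1))))) / 2).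
  assert (HY : 0 < Y).
  { unfold Y. apply Rdiv_lt_0_compat; [|lra]. repeat apply Rmin_glb_lt; auto; try lra. apply Rdiv_lt_0_compat; lra. }
  assert (Hm : forall y, 0 < y <= Y -> Rabs y < d0 /\ Rabs y < d1 /\ Rabs y < d2 /\ Rabs y < d3 /\
     Rabs y < d4 /\ Rabs y < d5 /\ y <= 1 /\ y <= 1 / (2 * (C1 + C2 + 1))).
  { intros y [Hy0 Hy0']. rewrite Rabs_right by lra. unfold Y in Hy0'.
    assert (Hy : 2 * y <= Rmin (Rmin (Rmin d0 d1) (Rmin d2 d3)) (Rmin (Rmin d4 d5) (Rmin 1 (1 / (2 * (C1 + C2 + 1)))))) by lra.
    apply Rmin_le_both in Hy as [Ha Hb].
    apply Rmin_le_both in Ha as [Ha Hc]. apply Rmin_le_both in Hb as [Hb Hd].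
    apply Rmin_le_both in Ha as [Ha1 Ha2]. apply Rmin_le_both in Hc as [Hc1 Hc2].
    apply Rmin_le_both in Hb as [Hb1 Hb2]. apply Rmin_le_both in Hd as [Hd1' Hd2'].
    repeat split; lra. }
  exists K, Y. split; [split; [auto|] |split; auto].
  { assert (2 * Y <= 1); [|lra]. unfold Y. 
    replace (2 * (Rmin (Rmin (Rmin d0 d1) (Rmin d2 d3)) (Rmin (Rmin d4 d5) (Rmin 1 (1 / (2 * (C1 + C2 + 1))))) / 2)) with (Rmin (Rmin (Rmin d0 d1) (Rmin d2 d3)) (Rmin (Rmin d4 d5) (Rmin 1 (1 / (2 * (C1 + C2 + 1)))))) by field.
    eapply Rle_trans; [apply Rmin_r|]. eapply Rle_trans; [apply Rmin_r|]. apply Rmin_l. }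
  intros y Hy. destruct (Hm y Hy) as (E0 & E1 & E2 & E3 & E4 & E5 & E6 & E7).
  specialize (HQ y E0). specialize (HT1 y E1). specialize (HT2 y E2).
  specialize (Hs3 y E3). specialize (Hs4 y E4). specialize (Hs5 y E5).
  apply abs_le in HQ. apply abs_le in HT1. apply abs_le in HT2.
  assert (HyC : y * (C1 + C2 + 1) <= 1/2).
  { apply (Rmult_le_compat_r (C1 + C2 + 1)) in E7; [|lra].
    replace (1 / (2 * (C1 + C2 + 1)) * (C1 + C2 + 1)) with (1/2) in E7 by (field; lra). lra. }
  split; [lra|split; [lra|split; [lra|]]].
  unfold sm, sp, pm, pp. rewrite qf_I. unfold cc, bb.
  rewrite R_id_p, R_id_m, L_zero. split.
  - assert (y * Tmf y rho H K beta Iv <= y * (C1 + C2 + 1)).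
    { apply Rmult_le_compat_l; lra. }
    assert (Q0f y rho H beta Iv - (4 + 4 * H) * K + y * Tmf y rho H K beta Iv <= 0) by lra.
    assert (0 <= y^2) by nra. nra.
  - assert (- (y * (C1 + C2 + 1)) <= y * Tpf y rho H K beta Iv).
    { assert (y * (- (C1 + C2 + 1)) <= y * Tpf y rho H K beta Iv) by (apply Rmult_le_compat_l; lra). lra. }
    assert (0 <= Q0f y rho H beta Iv + (4 + 4 * H) * K + y * Tpf y rho H K beta Iv) by lra.
    assert (0 <= y^2) by nra. nra.
Qed.

Lemma rc_of_cont (f : R -> R) : continuous f 0 -> f 0 = 0 ->
  forall e, 0 < e -> exists d, 0 < d /\ forall y, 0 <= y < d -> Rabs (f y) < e.
Proof.
  intros Hc H0 e He. destruct (cont_eps f 0 Hc e He) as [d [Hd Hdd]].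
  exists d; split; auto. intros y Hy. specialize (Hdd y ltac:(rewrite Rminus_0_r, Rabs_right; lra)).
  rewrite H0, Rminus_0_r in Hdd. auto.
Qed.

Lemma lsub_der K y : is_derive (fun t => t * sm K t) y (pm K y).
Proof. unfold sm, pm. auto_derive; auto. ring. Qed.
Lemma rsup_der K y : is_derive (fun t => t * sp K t) y (pp K y).
Proof. unfold sp, pp. auto_derive; auto. ring. Qed.

Lemma lsub_D K y : Derive (fun t : R => t * sm K t) y = pm K y.
Proof. apply is_derive_unique, lsub_der. Qed.
Lemma rsup_D K y : Derive (fun t : R => t * sp K t) y = pp K y.
Proof. apply is_derive_unique, rsup_der. Qed.

Definition SubSup K Y := 0 < Y <= 1 /\ 0 <= K /\ forall y, 0 < y <= Y ->
  0 < sm K y /\ 0 < sp K y /\ 0 < pp K y /\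
  qf H rho y * sm K y * (pm K y) ^ 2 - cc H * pm K y - bb H * sm K y <= 0 /\
  0 <= qf H rho y * sp K y * (pp K y) ^ 2 - cc H * pp K y - bb H * sp K y.

Lemma PS_sandwich K Y h : SubSup K Y -> PS H rho h ->
  forall y, 0 <= y <= Y -> y * sm K y <= h y <= y * sp K y.
Proof.
  intros [HY [HK HS]] [H0 [Hrc Hd]] y Hy.
  assert (Hb : 0 < bb H) by (unfold bb; lra).
  assert (Hc : 0 <= cc H) by (unfold cc; lra).
  split.
  - apply (cmp_ode (qf H rho) (bb H) (cc H) (fun t => t * sm K t) h Y); auto.
    + apply q_pos; auto.
    + ring.
    + apply rc_of_cont. apply exd_cont. eexists; apply lsub_der. ring.
    + intros t Ht. destruct (HS t Ht) as (P1 & P2 & P3 & S1 & S2).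
      destruct (Hd t ltac:(lra)) as (Q1 & Q2 & Q3 & Q4).
      rewrite lsub_D.
      split; [apply Rmult_lt_0_compat; lra|]. split; auto. split; [eexists; apply lsub_der|].
      split; auto. split; [|split; [auto|lra]].
      replace (qf H rho t * pm K t ^ 2 - cc H * (t / (t * sm K t)) * pm K t - bb H)
        with ((qf H rho t * sm K t * pm K t ^ 2 - cc H * pm K t - bb H * sm K t) / sm K t) by (field; lra).
      apply Rmult_le_0_r; [lra|]. left; apply Rinv_0_lt_compat; lra.
  - apply (cmp_ode (qf H rho) (bb H) (cc H) h (fun t => t * sp K t) Y); auto.
    + apply q_pos; auto.
    + ring.
    + apply rc_of_cont. apply exd_cont. eexists; apply rsup_der. ring.
    + intros t Ht. destruct (HS t Ht) as (P1 & P2 & P3 & S1 & S2).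
      destruct (Hd t ltac:(lra)) as (Q1 & Q2 & Q3 & Q4).
      rewrite rsup_D.
      split; auto. split; [apply Rmult_lt_0_compat; lra|]. split; auto. split; [eexists; apply rsup_der|].
      split; [lra|]. split; auto.
      replace (qf H rho t * pp K t ^ 2 - cc H * (t / (t * sp K t)) * pp K t - bb H)
        with ((qf H rho t * sp K t * pp K t ^ 2 - cc H * pp K t - bb H * sp K t) / sp K t) by (field; lra).
      apply Rdiv_le_0_compat; lra.
Qed.

Lemma PS_unique h1 h2 : PS H rho h1 -> PS H rho h2 -> forall y, 0 <= y -> h1 y = h2 y.
Proof.
  intros [H10 [Hrc1 Hd1]] [H20 [Hrc2 Hd2]] y Hy.
  assert (Hb : 0 < bb H) by (unfold bb; lra).
  assert (Hc : 0 <= cc H) by (unfold cc; lra).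
  assert (forall g1 g2 : R -> R, g1 0 = 0 -> g2 0 = 0 ->
    (forall e, 0 < e -> exists d, 0 < d /\ forall y, 0 <= y < d -> Rabs (g1 y) < e) ->
    (forall e, 0 < e -> exists d, 0 < d /\ forall y, 0 <= y < d -> Rabs (g2 y) < e) ->
    (forall y, 0 < y -> 0 < g1 y /\ ex_derive g1 y /\ 0 < Derive g1 y /\
     qf H rho y * (Derive g1 y) ^ 2 - cc H * (y / g1 y) * Derive g1 y - bb H = 0) ->
    (forall y, 0 < y -> 0 < g2 y /\ ex_derive g2 y /\ 0 < Derive g2 y /\
     qf H rho y * (Derive g2 y) ^ 2 - cc H * (y / g2 y) * Derive g2 y - bb H = 0) ->
    g1 y <= g2 y).
  { intros g1 g2 A1 A2 B1 B2 C1 C2.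
    apply (cmp_ode (qf H rho) (bb H) (cc H) g1 g2 y); auto; try lra.
    apply q_pos; auto.
    intros t Ht. destruct (C1 t ltac:(lra)) as (P1 & P2 & P3 & P4).
    destruct (C2 t ltac:(lra)) as (Q1 & Q2 & Q3 & Q4).
    repeat split; auto; lra. }
  apply Rle_antisym; auto.
Qed.
End Sand.

Lemma quad_root q b c k p : 0 < q -> 0 < b -> 0 < p -> q * p ^ 2 - c * k * p - b = 0 ->
  p = (c * k + sqrt (c ^ 2 * k ^ 2 + 4 * b * q)) / (2 * q).
Proof.
  intros Hq Hb Hp Heq.
  assert (E : c ^ 2 * k ^ 2 + 4 * b * q = (2 * q * p - c * k) ^ 2).
  { replace b with (q * p ^ 2 - c * k * p) at 1 by lra. ring. }
  assert (Pos : 0 <= 2 * q * p - c * k).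
  { assert (E1 : (2*q*p - c*k)*p = 2*(q*p^2) - c*k*p) by ring.
    assert (0 <= q * p ^ 2) by (apply Rmult_le_pos; [lra|apply pow2_ge_0]).
    destruct (Rle_or_lt 0 (2 * q * p - c * k)) as [|Hn]; auto.
    assert ((2*q*p - c*k)*p < 0) by (apply Rmult_neg_pos; lra). lra. }
  rewrite E, sqrt_pow2 by auto. field. lra.
Qed.

Lemma locally_pos t : 0 < t -> locally t (fun u => 0 < u).
Proof.
  intros Ht. exists (mkposreal (t/2) ltac:(lra)). intros u Hu.
  apply ballR in Hu. change (Rabs (u - t) < t / 2) in Hu. apply Rabs_def2 in Hu. lra.
Qed.

Section Exp.
Variables H rho : R.
Hypothesis hH : 0 < H <= 1/2.
Hypothesis hr : -1 < rho < 1.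

Definition Pf (y g : R) := (cc H * (y / g) + sqrt (cc H ^ 2 * (y / g) ^ 2 + 4 * bb H * qf H rho y)) / (2 * qf H rho y).
Definition qd (y : R) := 2 * rho * Iv H + 2 * y * Iv H ^ 2.

Lemma qf_der y : is_derive (qf H rho) y (qd y).
Proof. unfold qf, qd, Iv. auto_derive; auto. field. lra. Qed.

Variable h : R -> R.
Hypothesis hPS : PS H rho h.

Lemma h_pos t : 0 < t -> 0 < h t.
Proof. intros; apply hPS; auto. Qed.
Lemma h_exd t : 0 < t -> ex_derive h t.
Proof. intros; apply hPS; auto. Qed.
Lemma h_Dpos t : 0 < t -> 0 < Derive h t.
Proof. intros; apply hPS; auto. Qed.
Lemma h_rel t : 0 < t -> qf H rho t * (Derive h t) ^ 2 - cc H * (t / h t) * Derive h t - bb H = 0.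
Proof. intros; apply hPS; auto. Qed.

Lemma h_Pf t : 0 < t -> Derive h t = Pf t (h t).
Proof.
  intros Ht. unfold Pf. apply quad_root. apply q_pos; auto. unfold bb; lra. apply h_Dpos; auto.
  apply h_rel; auto.
Qed.

Lemma Pf_exd t : 0 < t -> ex_derive (fun u => Pf u (h u)) t.
Proof.
  intros Ht. pose proof (h_exd t Ht). pose proof (h_pos t Ht). pose proof (q_pos H rho hH hr t).
  assert (ex_derive (qf H rho) t) by (eexists; apply qf_der).
  unfold Pf. auto_derive. repeat split; auto; try lra.
  unfold bb. assert (0 < 4 * (2*H) * qf H rho t) by (repeat apply Rmult_lt_0_compat; lra).
  assert (0 <= cc H * (cc H * 1) * (t * / h t * (t * / h t * 1))).
  { replace (cc H * (cc H * 1) * (t * / h t * (t * / h t * 1))) with ((cc H * (t / h t))^2) by (field; lra).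
    apply pow2_ge_0. }
  lra.
Qed.

Lemma Dh_loc t : 0 < t -> locally t (fun u => Derive h u = Pf u (h u)).
Proof.
  intros Ht. destruct (locally_pos t Ht) as [e He]. exists e. intros u Hu. apply h_Pf, He, Hu.
Qed.

Lemma Dh_exd t : 0 < t -> ex_derive (Derive h) t.
Proof.
  intros Ht. apply (ex_derive_ext_loc (fun u => Pf u (h u))).
  - destruct (Dh_loc t Ht) as [e He]. exists e. intros u Hu. symmetry; apply He, Hu.
  - apply Pf_exd; auto.
Qed.

Lemma Dh_cont t : 0 < t -> continuous (Derive h) t.
Proof. intros; apply exd_cont, Dh_exd; auto. Qed.

Lemma h_cont t : 0 < t -> continuous h t.
Proof. intros; apply exd_cont, h_exd; auto. Qed.

Definition kd (t : R) := (h t - t * Derive h t) / (h t) ^ 2.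

Lemma h_D2 t : 0 < t ->
  Derive (Derive h) t * (2 * qf H rho t * Derive h t - cc H * (t / h t))
  = cc H * kd t * Derive h t - qd t * (Derive h t) ^ 2.
Proof.
  intros Ht. pose proof (h_pos t Ht). pose proof (h_exd t Ht). pose proof (Dh_exd t Ht).
  assert (ex_derive (qf H rho) t) by (eexists; apply qf_der).
  set (G := fun u => qf H rho u * (Derive h u) ^ 2 - cc H * (u / h u) * Derive h u - bb H).
  assert (HG : is_derive G t (qd t * (Derive h t) ^ 2 + qf H rho t * (2 * Derive h t * Derive (Derive h) t)
      - cc H * (kd t * Derive h t + (t / h t) * Derive (Derive h) t))).
  { unfold G, kd. auto_derive. repeat split; auto; lra.
    replace (Derive (fun x : R => qf H rho x) t) with (qd t) by (symmetry; apply Derive_eq, qf_der).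
    change (fun x : R => h x) with h. change (fun x : R => Derive h x) with (Derive h).
    field. lra. }
  assert (HG0 : is_derive G t 0).
  { apply (is_derive_ext_loc (fun _ => 0)).
    - destruct (locally_pos t Ht) as [e He]. exists e. intros u Hu. unfold G. 
      symmetry. apply h_rel, He, Hu.
    - apply (is_derive_const (K:=R_AbsRing) (V:=R_NormedModule) 0). }
  pose proof (is_derive_unique _ _ _ HG) as E1. pose proof (is_derive_unique _ _ _ HG0) as E2.
  rewrite E1 in E2. unfold zero in E2; simpl in E2. lra.
Qed.

Lemma D2_pos t : 0 < t -> 0 < 2 * qf H rho t * Derive h t - cc H * (t / h t).
Proof.
  intros Ht. pose proof (h_rel t Ht) as R. pose proof (h_Dpos t Ht) as P.
  pose proof (q_pos H rho hH hr t) as Q.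
  set (p := Derive h t) in *.
  assert (E : (2 * qf H rho t * p - cc H * (t / h t)) * p = qf H rho t * p ^ 2 + bb H).
  { replace ((2 * qf H rho t * p - cc H * (t / h t)) * p) with (2 * (qf H rho t * p ^ 2) - cc H * (t / h t) * p) by ring. lra. }
  assert (0 < qf H rho t * p ^ 2 + bb H) by (unfold bb; assert (0 < p^2) by nra; nra).
  destruct (Rlt_or_le 0 (2 * qf H rho t * p - cc H * (t / h t))) as [|Hn]; auto.
  assert ((2 * qf H rho t * p - cc H * (t / h t)) * p <= 0) by (apply Rmult_le_0_r; lra). lra.
Qed.

Definition E2 (u : R) := (cc H * kd u * Derive h u - qd u * (Derive h u) ^ 2) /
   (2 * qf H rho u * Derive h u - cc H * (u / h u)).

Lemma D2h_eq t : 0 < t -> Derive (Derive h) t = E2 t.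
Proof.
  intros Ht. unfold E2. pose proof (D2_pos t Ht). rewrite <- h_D2 by auto. unfold Rdiv. rewrite Rmult_assoc, Rinv_r, Rmult_1_r by lra. reflexivity.
Qed.

Lemma D2h_cont t : 0 < t -> continuous (Derive (Derive h)) t.
Proof.
  intros Ht. apply (continuous_ext_loc (Derive (Derive h)) E2).
  - destruct (locally_pos t Ht) as [e He]. exists e. intros u Hu. symmetry. apply D2h_eq, He, Hu.
  - pose proof (h_cont t Ht). pose proof (Dh_cont t Ht). pose proof (h_pos t Ht).
    assert (Cq : continuous (qf H rho) t) by (apply q_cont; auto).
    assert (Cqd : continuous qd t) by (apply exd_cont; unfold qd; auto_derive; auto).
    unfold E2, kd. apply cU_div.
    + apply cU_minus. apply cU_mult; [apply cU_mult; [apply cU_const|]|]; auto.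
      apply cU_div; auto. apply cU_minus; auto. apply cU_mult; [apply c_id|auto].
      apply cU_pow; auto. apply pow_nonzero; lra.
      apply cU_mult; auto. apply cU_pow; auto.
    + apply cU_minus. apply cU_mult; [apply cU_mult; [apply cU_const|]|]; auto.
      apply cU_mult; [apply cU_const|]. apply cU_div; auto. apply c_id. lra.
    + pose proof (D2_pos t Ht). lra.
Qed.
End Exp.

Section Exp2.
Variables H rho : R.
Hypothesis hH : 0 < H <= 1/2.
Hypothesis hr : -1 < rho < 1.
Variables K Y : R.
Hypothesis hSS : SubSup H rho K Y.
Variable h : R -> R.
Hypothesis hPS : PS H rho h.

Let B := beta H rho.
Let I := Iv H.

Lemma absB : Rabs B <= 1.
Proof.
  unfold B, beta. assert (3 <= (2 * H + 1) * (2 * H + 3)) by nra.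
  assert (E : -2 * rho / ((2 * H + 1) * (2 * H + 3)) * ((2 * H + 1) * (2 * H + 3)) = -2 * rho) by (field; lra).
  apply Rabs_le. set (t := -2 * rho / ((2 * H + 1) * (2 * H + 3))) in *. nra.
Qed.
Lemma absI : Rabs I <= 1.
Proof.
  unfold I, Iv. rewrite Rabs_right. rewrite <- Rinv_1. apply Rinv_le_contravar; lra.
  left; apply Rinv_0_lt_compat; lra.
Qed.
Lemma absr : Rabs rho <= 1.
Proof. apply Rabs_le; lra. Qed.
Lemma absH : Rabs H <= 1.
Proof. apply Rabs_le; lra. Qed.

Lemma hY : 0 < Y <= 1.
Proof. apply hSS. Qed.
Lemma hK : 0 <= K.
Proof. apply hSS. Qed.

Lemma sandw y : 0 <= y <= Y -> y * sm H rho K y <= h y <= y * sp H rho K y.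
Proof. apply PS_sandwich; auto. Qed.

Lemma S1 y : 0 <= y <= Y -> Rabs (h y - (y + B * y ^ 2)) <= K * y ^ 3.
Proof.
  intros Hy. pose proof (sandw y Hy) as [A1 A2]. unfold sm, sp in *. fold B in A1, A2.
  apply Rabs_le. split; nra.
Qed.

Definition th (y : R) := h y / y - (1 + B * y).

Lemma th_bnd y : 0 < y <= Y -> Rabs (th y) <= K * y ^ 2.
Proof.
  intros Hy. pose proof (S1 y ltac:(lra)) as A.
  unfold th. replace (h y / y - (1 + B * y)) with ((h y - (y + B * y ^ 2)) / y) by (field; lra).
  unfold Rdiv. rewrite Rabs_mult, Rabs_inv, (Rabs_right y) by lra.
  apply (Rmult_le_reg_r y); [lra|]. rewrite Rmult_assoc, Rinv_l, Rmult_1_r by lra.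
  replace (K * y ^ 2 * y) with (K * y ^ 3) by ring. auto.
Qed.

Lemma s_pos y : 0 < y <= Y -> 0 < h y / y.
Proof. intros Hy. apply Rdiv_lt_0_compat; [apply h_pos with H rho; auto; lra|lra]. Qed.

Lemma S2 : exists C1 Y1, 0 < Y1 <= Y /\ 0 <= C1 /\
  forall y, 0 < y <= Y1 -> Rabs (Derive h y - (1 + 2 * B * y)) <= C1 * y ^ 2.
Proof.
  pose proof hY as HY. pose proof hK as HK.
  set (b := 2 * H).
  set (Y1 := Rmin Y (b / (2 * (30 + 12 * K + 1)))).
  assert (HY1 : 0 < Y1 <= Y).
  { split; [apply Rmin_glb_lt; [lra|apply Rdiv_lt_0_compat; unfold b; lra]|apply Rmin_l]. }
  exists ((100 + 40 * K) * 2 / b), Y1. split; auto. split; [apply Rdiv_le_0_compat; unfold b; lra|].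
  intros y Hy.
  assert (HyY : 0 < y <= Y) by lra.
  assert (Hy2 : y <= b / (2 * (30 + 12 * K + 1))) by (eapply Rle_trans; [apply Hy|apply Rmin_r]).
  assert (Hyb : (30 + 12 * K) * y <= b / 2).
  { apply (Rmult_le_compat_l (2 * (30 + 12 * K + 1))) in Hy2; [|lra].
    replace (2 * (30 + 12 * K + 1) * (b / (2 * (30 + 12 * K + 1)))) with b in Hy2 by (field; lra). nra. }
  pose proof (th_bnd y HyY) as Hth.
  pose proof (s_pos y HyY) as Hs.
  pose proof (h_Dpos H rho h hPS y ltac:(lra)) as Hp.
  pose proof (h_rel H rho h hPS y ltac:(lra)) as Hrel.
  pose proof (q_pos H rho hH hr y) as Hq.
  pose proof (h_pos H rho h hPS y ltac:(lra)) as Hh.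
  set (p := Derive h y) in *. set (x := 1 + 2 * B * y).
  set (t := th y) in *.
  assert (Hsd : h y / y = 1 + B * y + t) by (unfold t, th; ring).
  assert (Hay : Rabs y <= 1) by (rewrite Rabs_right; lra).
  pose proof absB. pose proof absI. pose proof absr. pose proof absH.
  assert (Hq' : qf H rho y = 1 + 2*rho*y*I + y^2*I^2) by (apply qf_I; lra).
  assert (Psip : qf H rho y * (h y / y) * p ^ 2 - cc H * p - bb H * (h y / y) = 0).
  { replace (qf H rho y * (h y / y) * p ^ 2 - cc H * p - bb H * (h y / y))
      with ((h y / y) * (qf H rho y * p ^ 2 - cc H * (y / h y) * p - bb H)) by (field; lra).
    rewrite Hrel. ring. }
  assert (Psix : qf H rho y * (h y / y) * x ^ 2 - cc H * x - bb H * (h y / y)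
      = y ^ 2 * Q0f y rho H B I + t * ((1 + 2*rho*y*I + y^2*I^2) * (1 + 2*B*y)^2 - 2*H)).
  { rewrite Hsd, Hq'. unfold x, cc, bb. rewrite Psi_id.
    unfold B, I. rewrite (L_zero H rho hH). ring. }
  assert (Fac : (qf H rho y * (h y / y) * x ^ 2 - cc H * x - bb H * (h y / y))
     - (qf H rho y * (h y / y) * p ^ 2 - cc H * p - bb H * (h y / y))
     = (x - p) * (qf H rho y * (h y / y) * (x + p) - cc H)) by ring.
  rewrite Psip, Psix, Rminus_0_r in Fac.
  assert (Hqsx : b / 2 <= qf H rho y * (h y / y) * x - cc H).
  { assert (E : qf H rho y * (h y / y) * x - cc H = y * Wf y rho H B I + t * ((1 + 2*rho*y*I + y^2*I^2) * (1 + 2*B*y)) + b).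
    { rewrite Hsd, Hq'. unfold x, cc, b.
      replace ((1 + 2 * rho * y * I + y ^ 2 * I ^ 2) * (1 + B * y + t) * (1 + 2 * B * y) - (1 - 2 * H))
        with (((1 + 2*rho*y*I + y^2*I^2) * (1 + B*y) * (1 + 2*B*y) - 1) + t * ((1 + 2*rho*y*I + y^2*I^2) * (1 + 2*B*y)) + 2 * H) by ring.
      rewrite (W_id y rho H B I). ring. }
    rewrite E.
    pose proof (W_bnd y rho H B I Hay ltac:(auto) ltac:(auto) ltac:(auto) ltac:(auto)) as HW.
    pose proof (qx1_bnd y rho H B I Hay ltac:(auto) ltac:(auto) ltac:(auto) ltac:(auto)) as HQ1.
    assert (Rabs (y * Wf y rho H B I) <= 30 * y) by (rewrite Rabs_mult, (Rabs_right y) by lra; nra).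
    assert (Rabs (t * ((1 + 2*rho*y*I + y^2*I^2) * (1 + 2*B*y))) <= 12 * K * y).
    { rewrite Rabs_mult. assert (K * y ^ 2 <= K * y) by (apply Rmult_le_compat_l; nra).
      assert (0 <= Rabs t) by apply Rabs_pos. nra. }
    apply abs_le in H4. apply abs_le in H5. nra. }
  assert (HD : b / 2 <= qf H rho y * (h y / y) * (x + p) - cc H).
  { assert (0 < qf H rho y * (h y / y) * p) by (apply Rmult_lt_0_compat; [apply Rmult_lt_0_compat|]; lra).
    assert (qf H rho y * (h y / y) * (x + p) - cc H = (qf H rho y * (h y / y) * x - cc H) + qf H rho y * (h y / y) * p) by ring. lra. }
  assert (Hb : 0 < b) by (unfold b; lra).
  assert (HPs : Rabs (y ^ 2 * Q0f y rho H B I + t * ((1 + 2*rho*y*I + y^2*I^2) * (1 + 2*B*y)^2 - 2*H)) <= (100 + 40 * K) * y ^ 2).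
  { pose proof (Q0_bnd y rho H B I Hay ltac:(auto) ltac:(auto) ltac:(auto) ltac:(auto)) as HQ0.
    pose proof (qx_bnd y rho H B I Hay ltac:(auto) ltac:(auto) ltac:(auto) ltac:(auto)) as HQX.
    eapply Rle_trans; [apply Rabs_triang|]. rewrite !Rabs_mult.
    rewrite (Rabs_right (y ^ 2)) by (apply Rle_ge, pow2_ge_0).
    assert (0 <= y ^ 2) by apply pow2_ge_0. assert (0 <= Rabs t) by apply Rabs_pos. nra. }
  rewrite Fac in HPs. rewrite Rabs_mult in HPs. rewrite (Rabs_right (_ - cc H)) in HPs by lra.
  rewrite Rabs_minus_sym.
  apply (Rmult_le_reg_r (b / 2)). lra.
  replace ((100 + 40 * K) * 2 / b * y ^ 2 * (b / 2)) with ((100 + 40 * K) * y ^ 2) by (field; lra).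
  assert (0 <= Rabs (x - p)) by apply Rabs_pos. nra.
Qed.

Lemma S3 : exists C2 Y2, 0 < Y2 <= Y /\ 0 <= C2 /\
  forall y, 0 < y <= Y2 -> Rabs (Derive (Derive h) y - 2 * B) <= C2 * y.
Proof.
  pose proof hY as HY. pose proof hK as HK.
  destruct S2 as [C1 [Y1 [HY1 [HC1 HS2]]]].
  set (Y2 := Rmin Y1 (1 / (8 * (K + C1 + 1)))).
  assert (HY2 : 0 < Y2 <= Y).
  { split; [apply Rmin_glb_lt; [lra|apply Rdiv_lt_0_compat; lra]|]. eapply Rle_trans; [apply Rmin_l|lra]. }
  set (m := (1 - rho ^ 2) / 8).
  assert (Hm : 0 < m) by (unfold m; nra).
  exists ((400 + 700 * K + 200 * C1 + 10 * (K + C1)) / m), Y2. split; auto. split.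
  { apply Rdiv_le_0_compat; lra. }
  intros y Hy.
  assert (HyY : 0 < y <= Y) by (split; [lra|]; eapply Rle_trans; [apply Hy|]; apply HY2).
  assert (Hy1 : 0 < y <= Y1) by (split; [lra|]; eapply Rle_trans; [apply Hy|apply Rmin_l]).
  assert (Hy8 : y * (8 * (K + C1 + 1)) <= 1).
  { assert (y <= 1 / (8 * (K + C1 + 1))) by (eapply Rle_trans; [apply Hy|apply Rmin_r]).
    apply (Rmult_le_compat_r (8 * (K + C1 + 1))) in H0; [|lra].
    replace (1 / (8 * (K + C1 + 1)) * (8 * (K + C1 + 1))) with 1 in H0 by (field; lra). lra. }
  pose proof (th_bnd y HyY) as Hth.
  pose proof (HS2 y Hy1) as He1.
  pose proof (s_pos y HyY) as Hs.
  pose proof (h_Dpos H rho h hPS y ltac:(lra)) as Hp.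
  pose proof (h_rel H rho h hPS y ltac:(lra)) as Hrel.
  pose proof (h_D2 H rho hH hr h hPS y ltac:(lra)) as HD2.
  pose proof (q_pos H rho hH hr y) as Hq.
  pose proof (q_lower H rho hH y) as Hql.
  pose proof (h_pos H rho h hPS y ltac:(lra)) as Hh.
  assert (Hq' : qf H rho y = 1 + 2*rho*y*I + y^2*I^2) by (apply qf_I; lra).
  set (p := Derive h y) in *. set (p2 := Derive (Derive h) y) in *.
  set (t := th y) in *. set (e1 := p - (1 + 2 * B * y)) in *.
  set (e2 := (t - e1) / y).
  assert (Hsd : h y / y = 1 + B * y + t) by (unfold t, th; ring).
  assert (Hpd : p = 1 + 2 * B * y + e1) by (unfold e1; ring).
  assert (Hay : Rabs y <= 1) by (rewrite Rabs_right; lra).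
  pose proof absB as aB. pose proof absI as aI. pose proof absr as ar. pose proof absH as aH.
  assert (Hky : K * y <= 1/8) by nra.
  assert (Hcy : C1 * y <= 1/8) by nra.
  assert (Ht1 : Rabs t <= 1) by (assert (K * y ^ 2 <= K * y) by (apply Rmult_le_compat_l; nra); nra).
  assert (He11 : Rabs e1 <= 1) by (assert (C1 * y ^ 2 <= C1 * y) by (apply Rmult_le_compat_l; nra); nra).
  assert (He2b : Rabs e2 <= (K + C1) * y).
  { unfold e2. unfold Rdiv. rewrite Rabs_mult, Rabs_inv, (Rabs_right y) by lra.
    apply (Rmult_le_reg_r y); [lra|]. rewrite Rmult_assoc, Rinv_l, Rmult_1_r by lra.
    eapply Rle_trans; [apply Rabs_triang|]. rewrite Rabs_Ropp. nra. }
  assert (He21 : Rabs e2 <= 1) by nra.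
  assert (Hs2 : 1/2 <= h y / y).
  { rewrite Hsd.
    assert (X1 : Rabs (B * y) <= y) by (rewrite Rabs_mult, (Rabs_right y) by lra; nra).
    apply abs_le in X1. assert (X2 : Rabs t <= 1/8) by (assert (K * y ^ 2 <= K * y) by (apply Rmult_le_compat_l; nra); nra).
    apply abs_le in X2. nra. }
  assert (Hp2 : 1/2 <= p).
  { rewrite Hpd. assert (X1 : Rabs (B * y) <= y) by (rewrite Rabs_mult, (Rabs_right y) by lra; nra).
    apply abs_le in X1. assert (X2 : Rabs e1 <= 1/8) by (assert (C1 * y ^ 2 <= C1 * y) by (apply Rmult_le_compat_l; nra); nra).
    apply abs_le in X2. nra. }
  set (k := y / h y).
  set (D2 := 2 * qf H rho y * p - cc H * k).
  assert (HD2v : D2 = qf H rho y * p + bb H / p).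
  { unfold D2. apply (Rmult_eq_reg_r p); [|lra]. field_simplify; [|lra]. unfold k in *. nra. }
  assert (HD2l : (1 - rho ^ 2) / 2 <= D2).
  { rewrite HD2v. assert (0 < bb H / p) by (apply Rdiv_lt_0_compat; unfold bb; lra). nra. }
  assert (Hsq : 1/4 <= (h y / y) ^ 2) by nra.
  assert (Hkd : kd h y * (h y / y) ^ 2 = - B + e2).
  { unfold kd, e2. fold p.
    replace ((h y - y * p) / h y ^ 2 * (h y / y) ^ 2) with (((h y / y) - p) / y) by (field; lra).
    rewrite Hsd, Hpd. field. lra. }
  assert (Hks : k * (h y / y) ^ 2 = h y / y) by (unfold k; field; lra).
  assert (Main : (p2 - 2 * B) * D2 * (h y / y) ^ 2 = y * Af y rho H B I + t * Bthf y rho H B I t e1 e2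
      + e1 * Be1f y rho H B I t e1 e2 + e2 * Be2f y rho H B I t e1 e2).
  { transitivity (cc H * (kd h y * (h y / y) ^ 2) * p - (h y / y) ^ 2 * qd H rho y * p ^ 2
       - 2 * B * (2 * qf H rho y * p * (h y / y) ^ 2 - cc H * (k * (h y / y) ^ 2))).
    { replace ((p2 - 2 * B) * D2 * (h y / y) ^ 2) with ((p2 * D2) * (h y / y) ^ 2 - 2 * B * D2 * (h y / y) ^ 2) by ring.
      unfold D2, k in *. rewrite HD2. ring. }
    rewrite Hkd, Hks, Hsd, Hpd, Hq'. unfold qd, cc. fold I.
    assert (E := N_id y rho H B I t e1 e2). assert (L0 : 3*B + 2*H*B + 2*rho*I = 0) by (unfold B, I; apply L_zero; auto).
    rewrite L0, Ropp_0, Rplus_0_l in E. rewrite <- E. ring. }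
  assert (HN : Rabs (y * Af y rho H B I + t * Bthf y rho H B I t e1 e2
      + e1 * Be1f y rho H B I t e1 e2 + e2 * Be2f y rho H B I t e1 e2) <= (400 + 700 * K + 200 * C1 + 10 * (K + C1)) * y).
  { pose proof (A_bnd y rho H B I Hay ar aH aB aI) as X1.
    pose proof (Bth_bnd y rho H B I t e1 e2 Hay ar aH aB aI Ht1 He11 He21) as X2.
    pose proof (Be1_bnd y rho H B I t e1 e2 Hay ar aH aB aI Ht1 He11 He21) as X3.
    pose proof (Be2_bnd y rho H B I t e1 e2 Hay ar aH aB aI Ht1 He11 He21) as X4.
    assert (Y2' : y ^ 2 <= y) by nra.
    assert (Z1 : Rabs (y * Af y rho H B I) <= 400 * y) by (rewrite Rabs_mult, (Rabs_right y) by lra; nra).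
    assert (Z2 : Rabs (t * Bthf y rho H B I t e1 e2) <= 700 * K * y).
    { rewrite Rabs_mult. assert (Rabs t <= K * y) by (assert (K * y ^ 2 <= K * y) by (apply Rmult_le_compat_l; nra); nra).
      assert (0 <= Rabs (Bthf y rho H B I t e1 e2)) by apply Rabs_pos. assert (0 <= Rabs t) by apply Rabs_pos. nra. }
    assert (Z3 : Rabs (e1 * Be1f y rho H B I t e1 e2) <= 200 * C1 * y).
    { rewrite Rabs_mult. assert (Rabs e1 <= C1 * y) by (assert (C1 * y ^ 2 <= C1 * y) by (apply Rmult_le_compat_l; nra); nra).
      assert (0 <= Rabs (Be1f y rho H B I t e1 e2)) by apply Rabs_pos. assert (0 <= Rabs e1) by apply Rabs_pos. nra. }
    assert (Z4 : Rabs (e2 * Be2f y rho H B I t e1 e2) <= 10 * (K + C1) * y).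
    { rewrite Rabs_mult. assert (0 <= Rabs (Be2f y rho H B I t e1 e2)) by apply Rabs_pos. assert (0 <= Rabs e2) by apply Rabs_pos. nra. }
    eapply Rle_trans; [apply Rabs_triang|]. eapply Rle_trans; [apply Rplus_le_compat_r, Rabs_triang|].
    eapply Rle_trans; [apply Rplus_le_compat_r, Rplus_le_compat_r, Rabs_triang|]. lra. }
  rewrite <- Main in HN. rewrite !Rabs_mult in HN.
  assert (0 < 1 - rho ^ 2) by nra. rewrite (Rabs_right D2) in HN by lra. rewrite (Rabs_right ((h y / y) ^ 2)) in HN by lra.
  assert (HDs : m <= D2 * (h y / y) ^ 2) by (unfold m; nra).
  apply (Rmult_le_reg_r m); auto.
  replace ((400 + 700 * K + 200 * C1 + 10 * (K + C1)) / m * y * m) with ((400 + 700 * K + 200 * C1 + 10 * (K + C1)) * y) by (field; lra).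
  assert (0 <= Rabs (p2 - 2 * B)) by apply Rabs_pos. nra.
Qed.
End Exp2.

Lemma deriv_of_bound (f : R -> R) x L C d : 0 < d ->
  (forall y, Rabs (y - x) < d -> Rabs (f y - f x - L * (y - x)) <= C * (y - x) ^ 2) ->
  is_derive f x L.
Proof.
  intros Hd Hb. apply is_derive_Reals. intros eps He.
  assert (HC : 0 <= Rabs C) by apply Rabs_pos.
  set (del := Rmin d (eps / (Rabs C + 1))).
  assert (Hdel : 0 < del) by (apply Rmin_glb_lt; [lra|apply Rdiv_lt_0_compat; lra]).
  exists (mkposreal del Hdel). intros h Hh0 Hh. simpl in Hh.
  assert (Hhd : Rabs h < d) by (eapply Rlt_le_trans; [apply Hh|apply Rmin_l]).
  assert (Hhe : Rabs h < eps / (Rabs C + 1)) by (eapply Rlt_le_trans; [apply Hh|apply Rmin_r]).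
  specialize (Hb (x + h)). replace (x + h - x) with h in Hb by ring. specialize (Hb Hhd).
  assert (Hah : 0 < Rabs h) by (apply Rabs_pos_lt; auto).
  replace ((f (x + h) - f x) / h - L) with ((f (x + h) - f x - L * h) / h) by (field; auto).
  unfold Rdiv. rewrite Rabs_mult, Rabs_inv.
  apply (Rmult_lt_reg_r (Rabs h)); auto. rewrite Rmult_assoc, Rinv_l, Rmult_1_r by lra.
  eapply Rle_lt_trans; [apply Hb|].
  assert (C * h ^ 2 <= Rabs C * (Rabs h * Rabs h)).
  { rewrite <- Rabs_mult. replace (h ^ 2) with (h * h) by ring.
    eapply Rle_trans; [apply Rle_abs|]. rewrite Rabs_mult. apply Rle_refl. }
  assert (Rabs h * (Rabs C + 1) < eps).
  { apply (Rmult_lt_compat_r (Rabs C + 1)) in Hhe; [|lra].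
    replace (eps / (Rabs C + 1) * (Rabs C + 1)) with eps in Hhe by (field; lra). lra. }
  nra.
Qed.

Lemma cont_of_bound (f : R -> R) x C d : 0 < d ->
  (forall y, Rabs (y - x) < d -> Rabs (f y - f x) <= C * Rabs (y - x)) -> continuous f x.
Proof.
  intros Hd Hb. apply continuity_pt_filterlim. intros eps He.
  assert (HC : 0 <= Rabs C) by apply Rabs_pos.
  exists (Rmin d (eps / (Rabs C + 1))). split; [apply Rmin_glb_lt; [lra|apply Rdiv_lt_0_compat; lra]|].
  intros y [_ Hy]. unfold R_dist in *. simpl in *. unfold R_dist in *.
  assert (Hyd : Rabs (y - x) < d) by (eapply Rlt_le_trans; [apply Hy|apply Rmin_l]).
  assert (Hye : Rabs (y - x) < eps / (Rabs C + 1)) by (eapply Rlt_le_trans; [apply Hy|apply Rmin_r]).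
  specialize (Hb y Hyd). eapply Rle_lt_trans; [apply Hb|].
  assert (C * Rabs (y - x) <= Rabs C * Rabs (y - x)) by (apply Rmult_le_compat_r; [apply Rabs_pos|apply Rle_abs]).
  assert (Rabs (y - x) * (Rabs C + 1) < eps).
  { apply (Rmult_lt_compat_r (Rabs C + 1)) in Hye; [|lra].
    replace (eps / (Rabs C + 1) * (Rabs C + 1)) with eps in Hye by (field; lra). lra. }
  pose proof (Rabs_pos (y - x)). nra.
Qed.

Lemma locally_neg t : t < 0 -> locally t (fun u => u < 0).
Proof.
  intros Ht. exists (mkposreal (- t/2) ltac:(lra)). intros u Hu.
  apply ballR in Hu. change (Rabs (u - t) < - t / 2) in Hu. apply Rabs_def2 in Hu. lra.
Qed.

Lemma refl_der (h : R -> R) y : ex_derive h (- y) -> is_derive (fun t => - h (- t)) y (Derive h (- y)).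
Proof.
  intros He. auto_derive. auto. 
  change (fun x : R => h x) with h. ring.
Qed.

Lemma beta_neg H rho : 0 < H <= 1/2 -> beta H (- rho) = - beta H rho.
Proof. intros. unfold beta. field. lra. Qed.
Lemma qf_neg H rho y : qf H (- rho) (- y) = qf H rho y.
Proof. unfold qf. unfold Rdiv. ring. Qed.

Definition glue (h1 h2 : R -> R) (y : R) := if Rle_dec 0 y then h1 y else - h2 (- y).

Section Glue.
Variables H rho : R.
Hypothesis hH : 0 < H <= 1/2.
Hypothesis hr : -1 < rho < 1.
Variables h1 h2 : R -> R.
Hypothesis P1 : PS H rho h1.
Hypothesis P2 : PS H (- rho) h2.

Lemma hr' : -1 < - rho < 1.
Proof. lra. Qed.

Let g := glue h1 h2.
Let B := beta H rho.

Lemma g_pos y : 0 <= y -> g y = h1 y.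
Proof. intros; unfold g, glue; destruct (Rle_dec 0 y); [auto|lra]. Qed.
Lemma g_neg y : y < 0 -> g y = - h2 (- y).
Proof. intros; unfold g, glue; destruct (Rle_dec 0 y); [lra|auto]. Qed.
Lemma g_0 : g 0 = 0.
Proof. rewrite g_pos by lra. apply P1. Qed.

Lemma gloc_pos y : 0 < y -> locally y (fun t => h1 t = g t).
Proof. intros Hy; destruct (locally_pos y Hy) as [e He]; exists e; intros u Hu; rewrite g_pos; auto; left; apply He, Hu. Qed.
Lemma gloc_neg y : y < 0 -> locally y (fun t => - h2 (- t) = g t).
Proof. intros Hy; destruct (locally_neg y Hy) as [e He]; exists e; intros u Hu; rewrite g_neg; auto; apply He, Hu. Qed.

Lemma Dg_pos y : 0 < y -> is_derive g y (Derive h1 y).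
Proof.
  intros Hy. apply (is_derive_ext_loc h1). apply gloc_pos; auto.
  apply Derive_correct, (h_exd H rho h1 P1); auto.
Qed.
Lemma Dg_neg y : y < 0 -> is_derive g y (Derive h2 (- y)).
Proof.
  intros Hy. apply (is_derive_ext_loc (fun t => - h2 (- t))). apply gloc_neg; auto.
  apply refl_der, (h_exd H (-rho) h2 P2); lra.
Qed.

Lemma Dgloc_pos y : 0 < y -> locally y (fun t => Derive h1 t = Derive g t).
Proof. intros Hy; destruct (locally_pos y Hy) as [e He]; exists e; intros u Hu.
  symmetry; apply Derive_eq, Dg_pos, He, Hu. Qed.
Lemma Dgloc_neg y : y < 0 -> locally y (fun t => Derive h2 (- t) = Derive g t).
Proof. intros Hy; destruct (locally_neg y Hy) as [e He]; exists e; intros u Hu.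
  symmetry; apply Derive_eq, Dg_neg, He, Hu. Qed.

Lemma D2g_pos y : 0 < y -> is_derive (Derive g) y (Derive (Derive h1) y).
Proof.
  intros Hy. apply (is_derive_ext_loc (Derive h1)). apply Dgloc_pos; auto.
  apply Derive_correct, (Dh_exd H rho hH hr h1 P1); auto.
Qed.
Lemma D2g_neg y : y < 0 -> is_derive (Derive g) y (- Derive (Derive h2) (- y)).
Proof.
  intros Hy. apply (is_derive_ext_loc (fun t => Derive h2 (- t))). apply Dgloc_neg; auto.
  assert (E : ex_derive (Derive h2) (- y)) by (apply (Dh_exd H (-rho) hH hr' h2 P2); lra).
  auto_derive; auto. change (fun x : R => Derive h2 x) with (Derive h2). ring.
Qed.

Lemma asym : exists C d, 0 < d <= 1 /\ 0 <= C /\ forall y, Rabs y < d ->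
  Rabs (g y - (y + B * y ^ 2)) <= C * Rabs y ^ 3 /\
  (y <> 0 -> Rabs (Derive g y - (1 + 2 * B * y)) <= C * Rabs y ^ 2 /\
             Rabs (Derive (Derive g) y - 2 * B) <= C * Rabs y).
Proof.
  destruct (subsup_exist H rho hH) as [K1 [Y1 SS1]].
  assert (SS1' : SubSup H rho K1 Y1) by exact SS1.
  destruct (subsup_exist H (-rho) hH) as [K2 [Y2 SS2]].
  assert (SS2' : SubSup H (-rho) K2 Y2) by exact SS2.
  pose proof (hY H rho K1 Y1 SS1') as HY1. pose proof (hK H rho K1 Y1 SS1') as HK1.
  pose proof (hY H (-rho) K2 Y2 SS2') as HY2. pose proof (hK H (-rho) K2 Y2 SS2') as HK2.
  destruct (S2 H rho hH hr K1 Y1 SS1' h1 P1) as [Ca [Ya [HYa [HCa Ea]]]].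
  destruct (S3 H rho hH hr K1 Y1 SS1' h1 P1) as [Cb [Yb [HYb [HCb Eb]]]].
  destruct (S2 H (-rho) hH hr' K2 Y2 SS2' h2 P2) as [Cc [Yc [HYc [HCc Ec]]]].
  destruct (S3 H (-rho) hH hr' K2 Y2 SS2' h2 P2) as [Cd [Yd [HYd [HCd Ed]]]].
  set (d := Rmin (Rmin Ya Yb) (Rmin Yc Yd)).
  assert (Hd : 0 < d) by (unfold d; repeat apply Rmin_glb_lt; lra).
  assert (Hda : d <= Ya /\ d <= Yb /\ d <= Yc /\ d <= Yd).
  { unfold d. pose proof (Rmin_l (Rmin Ya Yb) (Rmin Yc Yd)). pose proof (Rmin_r (Rmin Ya Yb) (Rmin Yc Yd)).
    pose proof (Rmin_l Ya Yb). pose proof (Rmin_r Ya Yb). pose proof (Rmin_l Yc Yd). pose proof (Rmin_r Yc Yd). lra. }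
  exists (K1 + K2 + Ca + Cb + Cc + Cd), d. split; [lra|]. split; [lra|].
  intros y Hy. pose proof (beta_neg H rho hH) as Bn. fold B in Bn.
  destruct (Rle_or_lt 0 y) as [Hy0|Hy0].
  - rewrite (Rabs_right y) in Hy |- * by lra. split.
    + rewrite g_pos by lra. pose proof (S1 H rho hH hr K1 Y1 SS1' h1 P1 y ltac:(lra)) as E1. fold B in E1.
      assert (0 <= y ^ 3) by (apply pow_le; lra). nra.
    + intros Hn. rewrite (Derive_eq _ _ _ (Dg_pos y ltac:(lra))), (Derive_eq _ _ _ (D2g_pos y ltac:(lra))).
      split.
      * specialize (Ea y ltac:(lra)). fold B in Ea. assert (0 <= y ^ 2) by (apply pow_le; lra). nra.
      * specialize (Eb y ltac:(lra)). fold B in Eb. nra.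
  - rewrite (Rabs_left y) in Hy |- * by lra. set (u := - y) in *.
    assert (Hu : y = - u) by (unfold u; ring). split.
    + rewrite g_neg by lra. fold u.
      pose proof (S1 H (-rho) hH hr' K2 Y2 SS2' h2 P2 u ltac:(lra)) as E1. rewrite Bn in E1.
      replace (- h2 u - (y + B * y ^ 2)) with (- (h2 u - (u + - B * u ^ 2))) by (rewrite Hu; ring).
      rewrite Rabs_Ropp. assert (0 <= u ^ 3) by (apply pow_le; lra). nra.
    + intros Hn. rewrite (Derive_eq _ _ _ (Dg_neg y ltac:(lra))), (Derive_eq _ _ _ (D2g_neg y ltac:(lra))).
      fold u. split.
      * specialize (Ec u ltac:(lra)). rewrite Bn in Ec.
        replace (Derive h2 u - (1 + 2 * B * y)) with (Derive h2 u - (1 + 2 * - B * u)) by (rewrite Hu; ring).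
        assert (0 <= u ^ 2) by (apply pow_le; lra). nra.
      * specialize (Ed u ltac:(lra)). rewrite Bn in Ed.
        replace (- Derive (Derive h2) u - 2 * B) with (- (Derive (Derive h2) u - 2 * - B)) by ring.
        rewrite Rabs_Ropp. nra.
Qed.

Lemma Dg0 : is_derive g 0 1.
Proof.
  destruct asym as [C [d [Hd [HC Ha]]]].
  apply (deriv_of_bound g 0 1 (Rabs B + C) d); [lra|].
  intros y Hy. rewrite Rminus_0_r in *. rewrite g_0.
  destruct (Ha y Hy) as [E _].
  replace (g y - 0 - 1 * y) with ((g y - (y + B * y ^ 2)) + B * y ^ 2) by ring.
  eapply Rle_trans; [apply Rabs_triang|]. rewrite Rabs_mult, (Rabs_right (y ^ 2)) by (apply Rle_ge, pow2_ge_0).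
  assert (Rabs y ^ 3 <= y ^ 2).
  { rewrite <- (pow2_abs y). replace (Rabs y ^ 3) with (Rabs y * Rabs y ^ 2) by ring.
    pose proof (Rabs_pos y). assert (0 <= Rabs y ^ 2) by apply pow2_ge_0. nra. }
  nra.
Qed.

Lemma Dg0_eq : Derive g 0 = 1.
Proof. apply Derive_eq, Dg0. Qed.

Lemma D2g0 : is_derive (Derive g) 0 (2 * B).
Proof.
  destruct asym as [C [d [Hd [HC Ha]]]].
  apply (deriv_of_bound (Derive g) 0 (2 * B) C d); [lra|].
  intros y Hy. rewrite Rminus_0_r in *. rewrite Dg0_eq.
  destruct (Req_dec y 0) as [->|Hn].
  - rewrite Dg0_eq. replace (1 - 1 - 2 * B * 0) with 0 by ring. rewrite Rabs_R0. nra.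
  - destruct (Ha y Hy) as [_ E]. destruct (E Hn) as [E1 _].
    replace (Derive g y - 1 - 2 * B * y) with (Derive g y - (1 + 2 * B * y)) by ring.
    rewrite <- (pow2_abs y). auto.
Qed.

Lemma D2g0_eq : Derive (Derive g) 0 = 2 * B.
Proof. apply Derive_eq, D2g0. Qed.

Lemma g_exd y : ex_derive g y.
Proof.
  destruct (Rtotal_order y 0) as [Hy|[->|Hy]].
  - eexists; apply Dg_neg; auto.
  - eexists; apply Dg0.
  - eexists; apply Dg_pos; auto.
Qed.

Lemma Dg_exd y : ex_derive (Derive g) y.
Proof.
  destruct (Rtotal_order y 0) as [Hy|[->|Hy]].
  - eexists; apply D2g_neg; auto.
  - eexists; apply D2g0.
  - eexists; apply D2g_pos; auto.
Qed.

Lemma Dg_cont y : continuous (Derive g) y.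
Proof. apply exd_cont, Dg_exd. Qed.

Lemma D2g_cont y : continuous (Derive (Derive g)) y.
Proof.
  destruct (Rtotal_order y 0) as [Hy|[->|Hy]].
  - apply (continuous_ext_loc _ (fun t => - Derive (Derive h2) (- t))).
    + destruct (locally_neg y Hy) as [e He]. exists e. intros u Hu. symmetry.
      apply Derive_eq, D2g_neg, He, Hu.
    + apply cU_opp. apply (cU_comp (fun t => - t)). apply cU_opp, c_id.
      apply (D2h_cont H (-rho) hH hr' h2 P2). lra.
  - destruct asym as [C [d [Hd [HC Ha]]]].
    apply (cont_of_bound _ 0 C d); [lra|]. intros y Hy. rewrite Rminus_0_r in *. rewrite D2g0_eq.
    destruct (Req_dec y 0) as [->|Hn].
    + rewrite D2g0_eq. replace (2 * B - 2 * B) with 0 by ring. rewrite !Rabs_R0. lra.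
    + destruct (Ha y Hy) as [_ E]. apply (E Hn).
  - apply (continuous_ext_loc _ (Derive (Derive h1))).
    + destruct (locally_pos y Hy) as [e He]. exists e. intros u Hu. symmetry.
      apply Derive_eq, D2g_pos, He, Hu.
    + apply (D2h_cont H rho hH hr h1 P1). lra.
Qed.

Lemma g_ode y : y <> 0 -> ode_at H rho g y.
Proof.
  intros Hy. unfold ode_at.
  destruct (Rtotal_order y 0) as [Hn|[->|Hp]]; [|lra|].
  - rewrite (Derive_eq _ _ _ (Dg_neg y Hn)), g_neg by auto.
    pose proof (h_pos H (-rho) h2 P2 (- y) ltac:(lra)) as Pp.
    pose proof (h_rel H (-rho) h2 P2 (- y) ltac:(lra)) as R.
    rewrite qf_neg in R. unfold qf in R. unfold cc, bb in R.
    split; [lra|].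
    replace (- y / h2 (- y)) with (y / - h2 (- y)) in R by (field; lra).
    replace (y * Derive h2 (- y) / - h2 (- y)) with (y / - h2 (- y) * Derive h2 (- y)) by (field; lra).
    lra.
  - rewrite (Derive_eq _ _ _ (Dg_pos y Hp)), g_pos by lra.
    pose proof (h_pos H rho h1 P1 y Hp) as Pp.
    pose proof (h_rel H rho h1 P1 y Hp) as R.
    unfold qf in R. unfold cc, bb in R.
    split; [lra|].
    replace (y * Derive h1 y / h1 y) with (y / h1 y * Derive h1 y) by (field; lra).
    lra.
Qed.

Theorem glue_all :
  is_solution H rho g /\ C2 g /\
  bigO_at0 g (fun y => Derive g 0 * y + Derive (Derive g) 0 * (y ^ 2 / 2)) 3 /\
  bigO_at0 (Derive g) (fun y => Derive g 0 + Derive (Derive g) 0 * y) 2 /\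
  bigO_at0 (Derive (Derive g)) (fun _ => Derive (Derive g) 0) 1 /\
  (forall y, y <> 0 -> 0 < g y / y).
Proof.
  assert (HC1 : Defs.C1 g) by (split; [apply g_exd|apply Dg_cont]).
  rewrite Dg0_eq, D2g0_eq.
  destruct asym as [C [d [Hd [HC Ha]]]].
  split; [|split; [|split; [|split; [|split]]]].
  - split; auto. split; [apply g_0|]. split; [rewrite Dg0_eq; lra|]. apply g_ode.
  - split; auto. split; [apply Dg_exd|apply D2g_cont].
  - exists C, d. split; [lra|]. intros y Hy. destruct (Ha y Hy) as [E _].
    replace (1 * y + 2 * B * (y ^ 2 / 2)) with (y + B * y ^ 2) by field. auto.
  - exists C, d. split; [lra|]. intros y Hy. destruct (Req_dec y 0) as [->|Hn].
    + rewrite Dg0_eq. replace (1 - (1 + 2 * B * 0)) with 0 by ring. rewrite !Rabs_R0. simpl. lra.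
    + destruct (Ha y Hy) as [_ E]. apply (E Hn).
  - exists C, d. split; [lra|]. intros y Hy. destruct (Req_dec y 0) as [->|Hn].
    + rewrite D2g0_eq. replace (2 * B - 2 * B) with 0 by ring. rewrite !Rabs_R0. simpl. lra.
    + destruct (Ha y Hy) as [_ E]. simpl. rewrite Rmult_1_r. apply (E Hn).
  - intros y Hy. destruct (Rtotal_order y 0) as [Hn|[->|Hp]]; [|lra|].
    + rewrite g_neg by auto. pose proof (h_pos H (-rho) h2 P2 (- y) ltac:(lra)).
      replace (- h2 (- y) / y) with (h2 (- y) / (- y)) by (field; lra).
      apply Rdiv_lt_0_compat; lra.
    + rewrite g_pos by lra. pose proof (h_pos H rho h1 P1 y Hp). apply Rdiv_lt_0_compat; lra.
Qed.
End Glue.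

Section Sol.
Variables H rho : R.
Hypothesis hH : 0 < H <= 1/2.
Hypothesis hr : -1 < rho < 1.
Variable g : R -> R.
Hypothesis hg : is_solution H rho g.

Lemma sg_C1 : Defs.C1 g. Proof. apply hg. Qed.
Lemma sg_0 : g 0 = 0. Proof. apply hg. Qed.
Lemma sg_D0 : 0 < Derive g 0. Proof. apply hg. Qed.
Lemma sg_ode y : y <> 0 -> ode_at H rho g y. Proof. apply hg. Qed.

Lemma sg_Dnz y : y <> 0 -> Derive g y <> 0.
Proof.
  intros Hy Hd. destruct (sg_ode y Hy) as [Hg E]. rewrite Hd in E.
  replace (y * 0 / g y) with 0 in E by (field; auto). simpl in E. lra.
Qed.

Lemma sg_Dpos y : 0 < Derive g y.
Proof.
  destruct (Rlt_or_le 0 (Derive g y)) as [|Hle]; auto. exfalso.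
  assert (Hy : y <> 0) by (intros ->; pose proof sg_D0; lra).
  assert (Hlt : Derive g y < 0) by (destruct Hle; auto; exfalso; apply (sg_Dnz y Hy); auto).
  assert (Hc : continuity (Derive g)).
  { intros x. apply continuity_pt_filterlim. apply sg_C1. }
  destruct (Rtotal_order y 0) as [Hn|[->|Hp]]; [|lra|].
  - destruct (IVT (Derive g) y 0 Hc Hn Hlt sg_D0) as [z [Hz Ez]].
    assert (z <> 0) by (intros ->; pose proof sg_D0; lra).
    apply (sg_Dnz z); auto.
  - assert (Hc' : continuity (fun x => - Derive g x)) by (apply continuity_opp; auto).
    destruct (IVT (fun x => - Derive g x) 0 y Hc' Hp ltac:(pose proof sg_D0; lra) ltac:(lra)) as [z [Hz Ez]].
    assert (z <> 0) by (intros ->; pose proof sg_D0; lra).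
    apply (sg_Dnz z); auto. lra.
Qed.

Lemma sg_mvt a b : a < b -> g a < g b.
Proof.
  intros Hab. destruct (MVT_gen g a b (Derive g)) as [c [Hc E]].
  - intros x _. apply Derive_correct, sg_C1.
  - intros x _. apply continuity_pt_filterlim, exd_cont, sg_C1.
  - pose proof (sg_Dpos c). assert (0 < Derive g c * (b - a)) by (apply Rmult_lt_0_compat; lra). lra.
Qed.

Lemma sg_gpos y : 0 < y -> 0 < g y.
Proof. intros; pose proof (sg_mvt 0 y H0); rewrite sg_0 in H1; auto. Qed.
Lemma sg_gneg y : y < 0 -> g y < 0.
Proof. intros; pose proof (sg_mvt y 0 H0); rewrite sg_0 in H1; auto. Qed.

Lemma sg_cont0 : forall e, 0 < e -> exists d, 0 < d /\ forall y, Rabs y < d -> Rabs (g y) < e.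
Proof.
  intros e He. destruct (cont_eps g 0 (exd_cont g 0 (proj1 sg_C1 0)) e He) as [d [Hd Hdd]].
  exists d; split; auto. intros y Hy. specialize (Hdd y ltac:(rewrite Rminus_0_r; auto)).
  rewrite sg_0, Rminus_0_r in Hdd. auto.
Qed.

Lemma sg_PS : PS H rho g.
Proof.
  split; [apply sg_0|split].
  - intros e He. destruct (sg_cont0 e He) as [d [Hd Hdd]]. exists d; split; auto.
    intros y Hy. apply Hdd. rewrite Rabs_right; lra.
  - intros y Hy. pose proof (sg_gpos y Hy). split; auto. split; [apply sg_C1|]. split; [apply sg_Dpos|].
    destruct (sg_ode y ltac:(lra)) as [_ E]. unfold qf, cc, bb.
    replace (y * Derive g y / g y) with (y / g y * Derive g y) in E by (field; lra). lra.
Qed.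

Lemma sg_refl_der y : is_derive (fun t => - g (- t)) y (Derive g (- y)).
Proof. apply refl_der, sg_C1. Qed.

Lemma sg_refl_D y : Derive (fun t : R => - g (- t)) y = Derive g (- y).
Proof. apply is_derive_unique, sg_refl_der. Qed.

Lemma sg_PSr : PS H (- rho) (fun t => - g (- t)).
Proof.
  split; [rewrite Ropp_0, sg_0; ring|split].
  - intros e He. destruct (sg_cont0 e He) as [d [Hd Hdd]]. exists d; split; auto.
    intros y Hy. rewrite Rabs_Ropp. apply Hdd. rewrite Rabs_Ropp, Rabs_right; lra.
  - intros y Hy. pose proof (sg_gneg (- y) ltac:(lra)).
    rewrite sg_refl_D.
    split; [lra|]. split; [eexists; apply sg_refl_der|]. split; [apply sg_Dpos|].
    destruct (sg_ode (- y) ltac:(lra)) as [_ E].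
    unfold qf, cc, bb.
    assert (Q : 1 + 2 * - rho * (y / (2 * H + 1)) + y ^ 2 / (2 * H + 1) ^ 2
      = 1 + 2 * rho * (- y / (2 * H + 1)) + (- y) ^ 2 / (2 * H + 1) ^ 2) by (unfold Rdiv; ring).
    rewrite Q.
    replace (- y * Derive g (- y) / g (- y)) with (y / - g (- y) * Derive g (- y)) in E by (field; lra).
    lra.
Qed.

Lemma sg_glue : g = glue g (fun t => - g (- t)).
Proof.
  apply functional_extensionality. intros y. unfold glue. destruct (Rle_dec 0 y); auto.
  rewrite !Ropp_involutive. reflexivity.
Qed.
End Sol.

Theorem lemmaA2 (H rho : R) (hH : 0 < H <= 1 / 2) (hrho : -1 < rho < 1) :
  (exists g : R -> R, is_solution H rho g) /\
  (forall g1 g2 : R -> R, is_solution H rho g1 -> is_solution H rho g2 ->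
     forall y, g1 y = g2 y) /\
  (forall g : R -> R, is_solution H rho g ->
     C2 g /\
     bigO_at0 g (fun y => Derive g 0 * y
                          + Derive (Derive g) 0 * (y ^ 2 / 2)) 3 /\
     bigO_at0 (Derive g) (fun y => Derive g 0 + Derive (Derive g) 0 * y) 2 /\
     bigO_at0 (Derive (Derive g)) (fun _ => Derive (Derive g) 0) 1 /\
     (forall y, y <> 0 -> 0 < g y / y)).
Proof.
  assert (hr' : -1 < - rho < 1) by lra.
  split; [|split].
  - exists (glue (hp H rho) (hp H (- rho))).
    apply (glue_all H rho hH hrho (hp H rho) (hp H (- rho)) (hp_PS H rho hH hrho) (hp_PS H (- rho) hH hr')).
  - intros g1 g2 Hg1 Hg2 y.
    destruct (Rle_or_lt 0 y) as [Hy|Hy].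
    + apply (PS_unique H rho hH hrho g1 g2 (sg_PS H rho hH g1 Hg1) (sg_PS H rho hH g2 Hg2)); auto.
    + pose proof (PS_unique H (- rho) hH hr' _ _ (sg_PSr H rho hH g1 Hg1) (sg_PSr H rho hH g2 Hg2) (- y) ltac:(lra)) as E.
      simpl in E. rewrite Ropp_involutive in E. lra.
  - intros g Hg. rewrite (sg_glue g).
    apply (glue_all H rho hH hrho g (fun t => - g (- t)) (sg_PS H rho hH g Hg) (sg_PSr H rho hH g Hg)).
Qed.
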